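(* In the setting and construction described in the context, let $n\in\mathbb{N}$ and let $x\in c_{00}$ with $\operatorname{supp}x\subseteq M_n$ and $\|x\|_{\mathcal{S}_{\eta_n}}\le 4^{-n}(|K_{4^{-n},p_n,\eta_n}|+1)^{-1}$. If $0\le m<n$ and $\mathcal{T}$ is a $(p_m,q_m)$-restricted $(\mathcal{F}_k)$-admissible tree, then $\mathcal{T}x\le 4^{-n}+\frac{\theta_{p_n}}{\varepsilon}\|x\|_{\ell^1}$ if $m=0$, and $\mathcal{T}x\le 4^{-n}+\theta_{p_n}\|x\|_{\ell^1}(4^{-n}+4^{-m})$ if $0<m<n$.
   Context: Standing setting: $(\theta_n)$ nonincreasing null in $(0,1)$; $(\mathcal{F}_n)$ regular families (hereditary, spreading, compact in $[\mathbb{N}]^{<\infty}\subseteq 2^{\mathbb{N}}$); $X=T[(\theta_n,\mathcal{F}_n)]$ is the completion of $c_{00}$ under $\|x\|=\max\{\|x\|_{c_0},\sup_n\sup\theta_n\sum_{i}\|E_ix\|\}$, inner sup over $\mathcal{F}_n$-admissible $(E_i)$ (sets $E_1<\dots<E_k$, i.e. $\max E_i<\min E_{i+1}$, with $\{\min E_i\}\in\mathcal{F}_n$); $Ex$ = restriction of $x$ to $E$. $\alpha_n=\iota(\mathcal{F}_n)>1$ (Cantor–Bendixson index), $\alpha=\sup\alpha_n\ne\alpha_n$ for all $n$, $\alpha=\omega^{\omega^\xi}$, $0<\xi<\omega_1$. Schreier families: $\mathcal{S}_0$ = singletons and $\emptyset$, $\mathcal{S}_1=\{F:|F|\le\min F\}$,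 $\mathcal{S}_{\beta+1}=\mathcal{S}_1[\mathcal{S}_\beta]$, and for limit $\beta$, $\mathcal{S}_\beta=\{F: F\in\mathcal{S}_{\beta_k}\text{ for some }k\le\min F\}$ for a fixed sequence $\beta_k\uparrow\beta$. $\mathcal{M}[\mathcal{N}]$ = unions of $\mathcal{M}$-admissible sequences of members of $\mathcal{N}$; $[\mathcal{M}_1,\dots,\mathcal{M}_{i+1}]=[\mathcal{M}_1,\dots,\mathcal{M}_i][\mathcal{M}_{i+1}]$, the empty list gives $\mathcal{S}_0$. $\|y\|_{\mathcal{F}}=\sup_{F\in\mathcal{F}}\sum_{k\in F}|y_k|$. $\ell(\beta)$ = leading exponent in the Cantor normal form of $\beta\ge1$. $\gamma(\varepsilon,m)=\max\{\ell(\alpha_{n_s}\cdots\alpha_{n_1}):\varepsilon\theta_{n_1}\cdots\theta_{n_s}>\theta_m\}$ ($\max\emptyset=0$). Condition $(\dagger)$: there exists $\varepsilon>0$ such that for every $\beta<\omega^\xi$ some $m$ has $\gamma(\varepsilon,m)+2+\beta<\ell(\alpha_m)$; assume $(\dagger)$ holds and fix such $\varepsilon\in(0,1)$. $\mathcal{N}_r=\{(0,n_1,\dots,n_s):s\ge0,\ \varepsilon\theta_{n_1}\cdots\theta_{n_s}>\theta_r\}$; $K_{\delta,p,\eta}=\{(0,n_1,\dots,n_s):s\ge0,\ \theta_{n_1}\cdots\theta_{n_s}>\delta\theta_p,\ \ell(\alpha_{n_s}\cdots\alpha_{n_1})<\eta\}$ (finite). Trees: finite collections of finite sets arranged in levels,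 each level ordered $E_1<\dots<E_k$, each node of level $m+1$ inside a node of level $m$ (its immediate predecessor); $(\mathcal{F}_n)$-admissible: one root, and the immediate successors of each node (if any) form an $\mathcal{F}_n$-admissible collection for some specified $n$; history $h(\text{root})=(0)$, successor history $(h(E),n)$; tag $t(E)=\theta_{n_1}\cdots\theta_{n_m}$ for $h(E)=(0,n_1,\dots,n_m)$; $\mathcal{T}x=\sum_{E\text{ leaf}}t(E)\|Ex\|_{c_0}$. For $p<q$, a tree is $(p,q)$-restricted if each leaf lies in a node $G$ with $h(G)\in\mathcal{N}_q\setminus\mathcal{N}_p$; a ''$(p_0,q_0)$-restricted'' tree means any admissible tree (no restriction). Construction: $(\beta_n)$ is the sequence increasing to $\omega^\xi$ defining $\mathcal{S}_{\omega^\xi}$; $M_0\subseteq\mathbb{N}$ infinite. Choose $p_1$ with $\theta_{p_1}\le\varepsilon^2/4$ and $\gamma(\varepsilon,p_1)+2+\beta_1<\ell(\alpha_{p_1})$, $\eta_1=\gamma(\varepsilon,p_1)+1$, $q_1$ with $\theta_{q_1}\le\varepsilon\theta_{p_1}/4$, and infinite $M_1\subseteq M_0$ with $\mathcal{S}_{\beta_1}[\mathcal{S}_{\eta_1+1}]\cap[M_1]^{<\infty}\subseteq\mathcal{F}_{p_1}$ and $[\mathcal{F}_{n_1},\dots,\mathcal{F}_{n_s}]\cap[M_1]^{<\infty}\subseteq\mathcal{S}_{\eta_1}$ for all $(0,n_1,\dots,n_s)\in K_{4^{-1},p_1,\eta_1}$. For $n\ge2$: $p_n>q_{n-1}$ with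 $\theta_{p_n}\le\varepsilon^2/4^n$ and $\gamma(\varepsilon,p_n)+2+\gamma(\varepsilon,q_{n-1})+2+\eta_{n-1}+1+\dots+\eta_1+1+\beta_n<\ell(\alpha_{p_n})$; $\eta_n=\gamma(\varepsilon,p_n)+\gamma(\varepsilon,q_{n-1})+1$; $q_n>p_n$ with $\theta_{q_n}\le\varepsilon\theta_{p_n}/4^n$; infinite $M_n\subseteq M_{n-1}$ with $\mathcal{S}_{\beta_n}[\mathcal{S}_{\eta_1+1},\dots,\mathcal{S}_{\eta_n+1}]\cap[M_n]^{<\infty}\subseteq\mathcal{F}_{p_n}$ and $[\mathcal{F}_{n_1},\dots,\mathcal{F}_{n_s}]\cap[M_n]^{<\infty}\subseteq\mathcal{S}_{\eta_n}$ for all $(0,n_1,\dots,n_s)\in K_{4^{-n},p_n,\eta_n}$. (All these choices are possible and the objects below refer to any fixed such choice.) *)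

(* Defs.v *)
From HB Require Import structures.
From mathcomp Require Import all_boot all_order all_algebra.
From mathcomp Require Import classical_sets reals.
From Stdlib Require Import ClassicalEpsilon.
Set Implicit Arguments. Unset Strict Implicit. Unset Printing Implicit Defensive.
Import Order.TTheory GRing.Theory Num.Theory.

(* Countable ordinals as Brouwer trees, with the usual (extensional)    *)
(* order; ordinals are compared up to [oeq].                             *)
Inductive ord : Type :=
| Ozero : ord
| Osucc : ord -> ord
| Olim : (nat -> ord) -> ord.

Inductive ole : ord -> ord -> Prop :=
| ole_z b : ole Ozero b
| ole_s a b : olt a b -> ole (Osucc a) b
| ole_l f b : (forall k, ole (f k) b) -> ole (Olim f) b
with olt : ord -> ord -> Prop :=
| olt_s a b : ole a b -> olt a (Osucc b)
| olt_l a f k : olt a (f k) -> olt a (Olim f).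

Definition oeq a b := ole a b /\ ole b a.

Definition oone := Osucc Ozero.
Definition otwo := Osucc oone.
Definition ofin (k : nat) : ord := iter k Osucc Ozero.
Definition omega := Olim ofin.

Fixpoint oadd (a b : ord) : ord :=
  match b with
  | Ozero => a
  | Osucc c => Osucc (oadd a c)
  | Olim f => Olim (fun k => oadd a (f k))
  end.

Fixpoint omul (a b : ord) : ord :=
  match b with
  | Ozero => Ozero
  | Osucc c => oadd (omul a c) a
  | Olim f => Olim (fun k => omul a (f k))
  end.

Fixpoint oexp (b : ord) : ord :=
  match b with
  | Ozero => oone
  | Osucc c => omul (oexp c) omega
  | Olim f => Olim (fun k => oexp (f k))
  end.

Definition ord_inh : inhabited ord := inhabits Ozero.

(* l(beta): leading exponent of the Cantor normal form of beta >= 1,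
   i.e. the g with omega^g <= beta < omega^(g+1). *)
Definition ell (b : ord) : ord :=
  epsilon ord_inh (fun g => ole (oexp g) b /\ olt b (oexp (Osucc g))).

Definition is_limit (a : ord) :=
  ~ oeq a Ozero /\ forall b, ~ oeq a (Osucc b).

(* Finite subsets of N = {1,2,...}: strictly increasing seqs of positive *)
Definition fset (s : seq nat) : bool := sorted ltn s && all (fun k => 0 < k)%N s.

Definition fam := seq nat -> Prop.

Definition hereditary (F : fam) :=
  forall s t, F s -> fset t -> {subset t <= s} -> F t.

Definition spreading (F : fam) :=
  forall s t, F s -> fset t -> size t = size s ->
    (forall i, (i < size s)%N -> (nth 0 s i <= nth 0 t i)%N) -> F t.

(* compact in [N]^{<oo} \subseteq 2^N: members are finite sets and F is
   closed in the product topology of 2^N. *)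
Definition compact_fam (F : fam) :=
  (forall s, F s -> fset s) /\
  forall A : nat -> bool,
    (forall N, exists s, F s /\ forall k, (k < N)%N -> (k \in s) = A k) ->
    exists s, F s /\ forall k, (k \in s) = A k.

Definition regular (F : fam) := [/\ hereditary F, spreading F & compact_fam F].

Definition deriv (F : fam) : fam := fun s =>
  fset s /\ forall N, exists t, F t /\ t <> s /\
    forall k, (k < N)%N -> (k \in t) = (k \in s).

Fixpoint CBd (F : fam) (a : ord) : fam :=
  match a with
  | Ozero => F
  | Osucc b => deriv (CBd F b)
  | Olim f => fun s => forall k, CBd F (f k) s
  end.

Definition CBindex (F : fam) (a : ord) :=
  (forall s, ~ CBd F a s) /\ forall b, olt b a -> exists s, CBd F b s.

Definition iota_CB (F : fam) : ord := epsilon ord_inh (CBindex F).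

Definition adm (M : fam) (Es : seq (seq nat)) :=
  all (fun E => (E != [::]) && fset E) Es /\
  sorted (fun A B => (last 0 A < head 0 B)%N) Es /\
  M (map (head 0) Es).

Definition comp (M N : fam) : fam := fun s =>
  exists Es, adm M Es /\ (forall E, E \in Es -> N E) /\ s = flatten Es.

Definition S0 : fam := fun s => fset s && (size s <= 1)%N.
Definition S1 : fam := fun s => fset s && (size s <= head 0 s)%N.

Definition comp_list (Ms : seq fam) : fam := foldl comp S0 Ms.

(* S : ord -> fam is a system of Schreier families for some fixed choice of
   strictly increasing sequences beta_k (k >= 1) with sup beta at limits. *)
Definition schreier_sys (S : ord -> fam) :=
  [/\ (forall a b, oeq a b -> forall s, S a s <-> S b s),
      (forall a, oeq a Ozero -> forall s, S a s <-> S0 s),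
      (forall a b, oeq a (Osucc b) -> forall s, S a s <-> comp S1 (S b) s) &
      (forall a, is_limit a -> exists f : nat -> ord,
          [/\ forall k, (1 <= k)%N -> olt (f k) (f k.+1),
              oeq (Olim (fun k => f k.+1)) a &
              forall s, S a s <-> (s = [::] \/
                 exists k, (1 <= k)%N /\ (k <= head 0 s)%N /\ S (f k) s)])].

Section Real.
Variable R : realType.
Local Open Scope ring_scope.
Local Open Scope classical_set_scope.

Definition tagp (theta : nat -> R) (ns : seq nat) : R := \prod_(k <- ns) theta k.

(* alpha_{n_s} ... alpha_{n_1} for ns = [n_1; ...; n_s] *)
Definition prodA (alpha : nat -> ord) (ns : seq nat) : ord :=
  foldl (fun acc k => omul (alpha k) acc) oone ns.

Definition posl (ns : seq nat) : bool := all (fun k => 0 < k)%N ns.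

(* gamma(eps,m) = max { l(alpha_{n_s}...alpha_{n_1}) : eps theta_{n_1}..theta_{n_s} > theta_m },
   max of the empty set = 0 *)
Definition is_gamma (theta : nat -> R) (alpha : nat -> ord) (eps : R) (m : nat) (g : ord) :=
  let P := fun ns => posl ns /\ theta m < eps * tagp theta ns in
  (forall ns, P ns -> ole (ell (prodA alpha ns)) g) /\
  ((exists ns, P ns /\ oeq (ell (prodA alpha ns)) g) \/
   ((forall ns, ~ P ns) /\ g = Ozero)).

Definition gamma (theta : nat -> R) (alpha : nat -> ord) (eps : R) (m : nat) : ord :=
  epsilon ord_inh (is_gamma theta alpha eps m).

(* N_r and K_{delta,p,eta}: histories (0,n_1,...,n_s) represented by [n_1;...;n_s] *)
Definition inN (theta : nat -> R) (eps : R) (r : nat) (ns : seq nat) : Prop :=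
  posl ns /\ theta r < eps * tagp theta ns.

Definition inK (theta : nat -> R) (alpha : nat -> ord) (delta : R) (p : nat) (eta : ord)
  (ns : seq nat) : Prop :=
  [/\ posl ns, delta * theta p < tagp theta ns & olt (ell (prodA alpha ns)) eta].

Definition card_of (P : seq nat -> Prop) : nat :=
  epsilon (inhabits 0%N) (fun k => exists s : seq (seq nat),
     [/\ uniq s, (forall ns, P ns <-> ns \in s) & size s = k]).

Definition c00 (x : nat -> R) := exists N, forall k, (N <= k)%N -> x k = 0.

Definition fnorm (F : fam) (x : nat -> R) : R :=
  sup [set r | exists s, F s /\ r = \sum_(k <- s) `|x k|].

Definition l1norm (x : nat -> R) : R :=
  sup [set r | exists N, r = \sum_(k < N) `|x k|].

Definition c0norm_on (E : seq nat) (x : nat -> R) : R :=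
  \big[Num.max/0]_(k <- E) `|x k|.

End Real.

(* Trees: a node carries its set E, the index n specified for the      *)
(* admissibility of its immediate successors, and its successors.       *)
Inductive tree : Type := Node : seq nat -> nat -> seq tree -> tree.

Definition node_set (t : tree) : seq nat := let: Node E _ _ := t in E.

Fixpoint tree_adm (F : nat -> fam) (t : tree) : Prop :=
  match t with
  | Node E n ch =>
      fset E /\
      (ch = [::] \/
       [/\ (1 <= n)%N, adm (F n) (map node_set ch) &
           forall E', E' \in map node_set ch -> {subset E' <= E}]) /\
      (fix all_adm (l : seq tree) : Prop :=
         match l with [::] => True | c :: l' => tree_adm F c /\ all_adm l' end) ch
  end.

(* leaves together with their histories (n_1,...,n_m), given the history h
   of the current node *)
Fixpoint leaves (t : tree) (h : seq nat) : seq (seq nat * seq nat) :=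
  match t with
  | Node E n ch =>
      if ch is [::] then [:: (E, h)]
      else (fix lv (l : seq tree) : seq (seq nat * seq nat) :=
              match l with [::] => [::] | c :: l' => leaves c (rcons h n) ++ lv l' end) ch
  end.

Section Real2.
Variable R : realType.
Local Open Scope ring_scope.

Definition tree_eval (theta : nat -> R) (t : tree) (x : nat -> R) : R :=
  \sum_(l <- leaves t [::]) tagp theta l.2 * c0norm_on l.1 x.

(* (p,q)-restricted: every leaf lies in a node G (G on the path from the root
   to the leaf; the histories of those nodes are the prefixes of the leaf's
   history) with h(G) in N_q \ N_p. *)
Definition restricted (theta : nat -> R) (eps : R) (p q : nat) (t : tree) :=
  forall l, l \in leaves t [::] ->
    exists i, (i <= size l.2)%N /\
      inN theta eps q (take i l.2) /\ ~ inN theta eps p (take i l.2).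

Definition eta_of (theta : nat -> R) (alpha : nat -> ord) (eps : R) (p q : nat -> nat)
  (n : nat) : ord :=
  if n is 1%N then Osucc (gamma theta alpha eps (p 1%N))
  else Osucc (oadd (gamma theta alpha eps (p n)) (gamma theta alpha eps (q n.-1))).

Definition infinite_set (A : pred nat) := forall N, exists k, (N < k)%N /\ A k.

Definition inM (A : pred nat) (s : seq nat) : Prop := all A s.

Definition four_pow (n : nat) : R := (4%:R ^+ n)^-1.

Definition construction (theta : nat -> R) (F : nat -> fam) (eps : R) (S : ord -> fam)
  (beta : nat -> ord) (M : nat -> pred nat) (p q : nat -> nat) :=
  let alpha := fun k => iota_CB (F k) in
  let gam := gamma theta alpha eps in
  let eta := eta_of theta alpha eps p q in
  [/\ (forall k, M 0%N k -> (0 < k)%N) /\ infinite_set (M 0%N),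
      (forall n, (1 <= n)%N ->
         [/\ (1 <= p n)%N, (1 <= q n)%N, (forall k, M n k -> M n.-1 k)
           & infinite_set (M n)]),
      [/\ theta (p 1%N) <= eps ^+ 2 * four_pow 1,
          olt (oadd (oadd (gam (p 1%N)) otwo) (beta 1%N)) (ell (alpha (p 1%N))) &
          theta (q 1%N) <= eps * theta (p 1%N) * four_pow 1],
      (forall n, (2 <= n)%N ->
         [/\ (q n.-1 < p n)%N,
             theta (p n) <= eps ^+ 2 * four_pow n,
             olt (oadd
                   (foldl (fun acc i => oadd (oadd acc (eta i)) oone)
                      (oadd (oadd (oadd (gam (p n)) otwo) (gam (q n.-1))) otwo)
                      (rev (iota 1 n.-1)))
                   (beta n))
                 (ell (alpha (p n))),
             (p n < q n)%N &
             theta (q n) <= eps * theta (p n) * four_pow n]) &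
      (forall n, (1 <= n)%N ->
         (forall s, inM (M n) s ->
            foldl comp (S (beta n)) [seq S (Osucc (eta i)) | i <- iota 1 n] s ->
            F (p n) s) /\
         (forall ns, inK theta alpha (four_pow n) (p n) (eta n) ns ->
            forall s, inM (M n) s -> comp_list [seq F i | i <- ns] s ->
            S (eta n) s))].

End Real2.

(* Main.v *)
Require Import Defs.
From HB Require Import structures.
From mathcomp Require Import all_boot all_order all_algebra.
From mathcomp Require Import classical_sets reals.
From mathcomp Require Import boolp.
From mathcomp Require Import ring lra.
From Stdlib Require Import ClassicalEpsilon FunctionalExtensionality Classical.
Import Order.TTheory GRing.Theory Num.Theory.
Set Implicit Arguments. Unset Strict Implicit. Unset Printing Implicit Defensive.

Lemma olt_inv_z a : ~ olt a Ozero.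
Proof. by move=> H; inversion H. Qed.
Lemma ole_inv_s a b : ole (Osucc a) b -> olt a b.
Proof. by move=> H; inversion H. Qed.
Lemma ole_inv_l f b : ole (Olim f) b -> forall k, ole (f k) b.
Proof. by move=> H; inversion H. Qed.
Lemma olt_inv_s a b : olt a (Osucc b) -> ole a b.
Proof. by move=> H; inversion H. Qed.
Lemma olt_inv_l a f : olt a (Olim f) -> exists k, olt a (f k).
Proof. by move=> H; inversion H; eauto. Qed.

Lemma ole_lim x f k : ole x (f k) -> ole x (Olim f).
Proof.
elim: x => [|x IH|g IH] H; first exact: ole_z.
- apply: ole_s; apply: (olt_l (k:=k)); exact: (ole_inv_s H).
- apply: ole_l => j; apply: IH; exact: (ole_inv_l H).
Qed.

Lemma ole_refl a : ole a a.
Proof.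
elim: a => [|a IH|f IH]; first exact: ole_z.
- by apply: ole_s; apply: olt_s.
- by apply: ole_l => k; apply: (@ole_lim _ _ k).
Qed.

Lemma ord_trans_all c :
  (forall a b, ole a b -> olt b c -> olt a c) /\
  (forall a b, olt a b -> ole b c -> olt a c) /\
  (forall a b, ole a b -> ole b c -> ole a c).
Proof.
elim: c => [|c IH|g IH].
- have H2 : forall a b, ole a b -> olt b Ozero -> olt a Ozero.
    by move=> a b _ /olt_inv_z.
  have H3 : forall a b, olt a b -> ole b Ozero -> olt a Ozero.
    move=> a b; elim: b a => [|b IHb|f IHf] a.
    + by move/olt_inv_z.
    + by move=> _ /ole_inv_s /olt_inv_z.
    + by move=> /olt_inv_l [k Hk] /ole_inv_l /(_ k); apply: IHf.
  split=> //; split=> //.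
  move=> a b; elim: a => [|a IHa|f IHf].
  + by move=> _ _; exact: ole_z.
  + by move=> /ole_inv_s Hab Hb; apply: ole_s; apply: H3 Hab Hb.
  + by move=> /ole_inv_l Hf Hb; apply: ole_l => k; apply: IHf.
- case: IH => IH1 [IH2 IH3].
  have H1 : forall a b, ole a b -> olt b (Osucc c) -> olt a (Osucc c).
    move=> a b Hab /olt_inv_s Hbc; apply: olt_s; exact: IH3 Hab Hbc.
  have H2 : forall a b, olt a b -> ole b (Osucc c) -> olt a (Osucc c).
    move=> a b; elim: b a => [|b IHb|f IHf] a.
    + by move/olt_inv_z.
    + by move=> /olt_inv_s Hab /ole_inv_s Hb; apply: H1 Hab Hb.
    + by move=> /olt_inv_l [k Hk] /ole_inv_l /(_ k); apply: IHf.
  split=> //; split=> //.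
  move=> a b; elim: a => [|a IHa|f IHf].
  + by move=> _ _; exact: ole_z.
  + by move=> /ole_inv_s Hab Hb; apply: ole_s; apply: H2 Hab Hb.
  + by move=> /ole_inv_l Hf Hb; apply: ole_l => k; apply: IHf.
- have H1 : forall a b, ole a b -> olt b (Olim g) -> olt a (Olim g).
    move=> a b Hab /olt_inv_l [k Hk]; apply: (olt_l (k:=k)).
    by case: (IH k) => IH1 _; apply: IH1 Hab Hk.
  have H2 : forall a b, olt a b -> ole b (Olim g) -> olt a (Olim g).
    move=> a b; elim: b a => [|b IHb|f IHf] a.
    + by move/olt_inv_z.
    + by move=> /olt_inv_s Hab /ole_inv_s Hb; apply: H1 Hab Hb.
    + by move=> /olt_inv_l [k Hk] /ole_inv_l /(_ k); apply: IHf.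
  split=> //; split=> //.
  move=> a b; elim: a => [|a IHa|f IHf].
  + by move=> _ _; exact: ole_z.
  + by move=> /ole_inv_s Hab Hb; apply: ole_s; apply: H2 Hab Hb.
  + by move=> /ole_inv_l Hf Hb; apply: ole_l => k; apply: IHf.
Qed.

Lemma ole_trans a b c : ole a b -> ole b c -> ole a c.
Proof. by case: (ord_trans_all c) => _ [_ H]; apply: H. Qed.
Lemma ole_olt_trans a b c : ole a b -> olt b c -> olt a c.
Proof. by case: (ord_trans_all c) => H _; apply: H. Qed.
Lemma olt_ole_trans a b c : olt a b -> ole b c -> olt a c.
Proof. by case: (ord_trans_all c) => _ [H _]; apply: H. Qed.

Lemma olt_ole_all a : (forall b, ole a b -> ole a (Osucc b)) /\ (forall b, olt a b -> ole a b).
Proof.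
elim: a => [|a IH|f IH].
- by split=> b _; exact: ole_z.
- have L1 : forall b, ole (Osucc a) b -> ole (Osucc a) (Osucc b).
    move=> b /ole_inv_s H; apply: ole_s; apply: olt_s; exact: IH.2.
  split=> //.
  move=> b; elim: b => [|b IHb|g IHg].
  + by move/olt_inv_z.
  + by move/olt_inv_s; apply: L1.
  + by move/olt_inv_l=> [k Hk]; apply: (@ole_lim _ _ k); apply: IHg.
- have L1 : forall b, ole (Olim f) b -> ole (Olim f) (Osucc b).
    move=> b /ole_inv_l H; apply: ole_l => k; exact: (IH k).1.
  split=> //.
  move=> b; elim: b => [|b IHb|g IHg].
  + by move/olt_inv_z.
  + by move/olt_inv_s; apply: L1.
  + by move/olt_inv_l=> [k Hk]; apply: (@ole_lim _ _ k); apply: IHg.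
Qed.

Lemma olt_ole a b : olt a b -> ole a b.
Proof. exact: (olt_ole_all a).2. Qed.
Lemma olt_trans a b c : olt a b -> olt b c -> olt a c.
Proof. by move=> H1 H2; apply: olt_ole_trans H1 (olt_ole H2). Qed.
Lemma olt_succ a : olt a (Osucc a).
Proof. apply: olt_s; exact: ole_refl. Qed.
Lemma ole_succ a : ole a (Osucc a).
Proof. exact: olt_ole (olt_succ a). Qed.

Lemma olt_acc : forall b a, olt a b -> Acc olt a.
Proof.
elim=> [|b IH|f IH] a.
- by move/olt_inv_z.
- move/olt_inv_s=> Hab; constructor=> c Hca; apply: IH; exact: olt_ole_trans Hca Hab.
- by move/olt_inv_l=> [k Hk]; apply: IH Hk.
Qed.
Lemma olt_wf : well_founded olt.
Proof. move=> a; constructor=> c Hc; exact: olt_acc Hc. Qed.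
Lemma olt_irr a : ~ olt a a.
Proof.
move: a (olt_wf a); apply: Acc_ind => a0 _ IH Ha; exact: (IH _ Ha Ha).
Qed.

Lemma ord_total_all a : forall b, (ole a b \/ olt b a) /\ (olt a b \/ ole b a).
Proof.
elim: a => [|a IH|f IH] b.
- split; first by left; exact: ole_z.
  elim: b => [|b IHb|g IHg]; first by right; exact: ole_z.
  + by left; apply: olt_s; exact: ole_z.
  + case: (classic (exists k, olt Ozero (g k))) => [[k Hk]|Hn].
      by left; apply: olt_l Hk.
    right; apply: ole_l => k; case: (IHg k) => // Hk; case: Hn; by exists k.
- split.
  + case: (IH b) => _ [H|H]; [left; exact: ole_s | right; exact: olt_s].
  + elim: b => [|b IHb|g IHg]; first by right; exact: ole_z.
    * case: (IH b) => _ [H|H]; [left; apply: olt_s; exact: ole_s | right; apply: ole_s; exact: olt_s].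
    * case: (classic (exists k, olt (Osucc a) (g k))) => [[k Hk]|Hn].
        by left; apply: olt_l Hk.
      right; apply: ole_l => k; case: (IHg k) => // Hk; case: Hn; by exists k.
- have P1 : forall b, ole (Olim f) b \/ olt b (Olim f).
    move=> c; case: (classic (exists k, olt c (f k))) => [[k Hk]|Hn].
      by right; apply: olt_l Hk.
    left; apply: ole_l => k; case: ((IH k c).1) => // Hk; case: Hn; by exists k.
  split; first exact: P1.
  elim: b => [|b IHb|g IHg]; first by right; exact: ole_z.
  + case: (P1 b) => H; [left; exact: olt_s | right; exact: ole_s].
  + case: (classic (exists k, olt (Olim f) (g k))) => [[k Hk]|Hn].
      by left; apply: olt_l Hk.
    right; apply: ole_l => k; case: (IHg k) => // Hk; case: Hn; by exists k.
Qed.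

Lemma ord_total a b : ole a b \/ olt b a.
Proof. exact: (ord_total_all a b).1. Qed.
Lemma not_olt_ole a b : ~ olt b a -> ole a b.
Proof. by case: (ord_total a b). Qed.
Lemma not_ole_olt a b : ~ ole a b -> olt b a.
Proof. by case: (ord_total a b). Qed.
Lemma ole_olt_false a b : ole a b -> olt b a -> False.
Proof. move=> H1 H2; exact: olt_irr (ole_olt_trans H1 H2). Qed.


Lemma ole_S a b : ole a b -> ole (Osucc a) (Osucc b).
Proof. by move=> H; apply: ole_s; apply: olt_s. Qed.
Lemma olt_S a b : olt a b -> olt (Osucc a) (Osucc b).
Proof. by move=> H; apply: olt_s; apply: ole_s. Qed.
Lemma ole_lim_mono f g : (forall k, ole (f k) (g k)) -> ole (Olim f) (Olim g).
Proof. by move=> H; apply: ole_l => k; apply: (@ole_lim _ _ k). Qed.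
Lemma ole_lim_k f k : ole (f k) (Olim f).
Proof. apply: (@ole_lim _ _ k); exact: ole_refl. Qed.

Section Normal.
Variables (phi psi : ord -> ord) (c : ord).
Hypothesis phi0 : phi Ozero = c.
Hypothesis phiS : forall y, phi (Osucc y) = psi (phi y).
Hypothesis phiL : forall f, phi (Olim f) = Olim (fun k => phi (f k)).
Hypothesis psi_mono : forall z z', ole z z' -> ole (psi z) (psi z').
Hypothesis psi_infl : forall z, ole z (psi z).

Lemma normal_base y : ole c (phi y).
Proof.
elim: y => [|y IH|f IH]; first by rewrite phi0; exact: ole_refl.
- rewrite phiS; exact: ole_trans IH (psi_infl _).
- rewrite phiL; exact: ole_trans (IH 0) (ole_lim_k _ 0).
Qed.

Lemma normal_all y' : forall y, (ole y y' -> ole (phi y) (phi y')) /\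
                          (olt y y' -> ole (psi (phi y)) (phi y')).
Proof.
elim: y' => [|y' IH|g IH] y.
- have H2 : olt y Ozero -> ole (psi (phi y)) (phi Ozero) by move/olt_inv_z.
  split=> //; elim: y {H2} => [|y _|f IHf] H.
  + exact: ole_refl.
  + by move/ole_inv_s/olt_inv_z: H.
  + rewrite phiL; apply: ole_l => k; apply: IHf; exact: ole_inv_l H k.
- have H2 : forall y, olt y (Osucc y') -> ole (psi (phi y)) (phi (Osucc y')).
    move=> z /olt_inv_s Hz; rewrite phiS; apply: psi_mono; exact: (IH z).1.
  split; last exact: H2.
  elim: y => [|y _|f IHf] H.
  + rewrite phi0; exact: normal_base.
  + rewrite phiS; apply: H2; exact: ole_inv_s H.
  + rewrite phiL; apply: ole_l => k; apply: IHf; exact: ole_inv_l H k.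
- have H2 : forall y, olt y (Olim g) -> ole (psi (phi y)) (phi (Olim g)).
    move=> z /olt_inv_l [k Hk]; rewrite phiL.
    apply: ole_trans ((IH k z).2 Hk) _; exact: ole_lim_k.
  split; last exact: H2.
  elim: y => [|y _|f IHf] H.
  + rewrite phi0; exact: normal_base.
  + rewrite phiS; apply: H2; exact: ole_inv_s H.
  + rewrite phiL; apply: ole_l => k; apply: IHf; exact: ole_inv_l H k.
Qed.

Lemma normal_mono y y' : ole y y' -> ole (phi y) (phi y').
Proof. exact: (normal_all y' y).1. Qed.
Lemma normal_lt y y' : olt y y' -> ole (psi (phi y)) (phi y').
Proof. exact: (normal_all y' y).2. Qed.
End Normal.

Lemma oadd0l a : oadd Ozero a = a.
Proof.
elim: a => [|a IH|f IH] //=; first by rewrite IH.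
by congr Olim; apply: functional_extensionality => k.
Qed.

Lemma oaddA a b c : oadd a (oadd b c) = oadd (oadd a b) c.
Proof.
elim: c => [|c IH|f IH] //=; first by rewrite IH.
by congr Olim; apply: functional_extensionality => k.
Qed.

Lemma omul1r a : omul a oone = a.
Proof. by rewrite /oone /= oadd0l. Qed.

Lemma omulDr a b c : omul a (oadd b c) = oadd (omul a b) (omul a c).
Proof.
elim: c => [|c IH|f IH] //=; first by rewrite IH oaddA.
by congr Olim; apply: functional_extensionality => k.
Qed.

Lemma omulA a b c : omul a (omul b c) = omul (omul a b) c.
Proof.
elim: c => [|c IH|f IH] //=; first by rewrite omulDr IH.
by congr Olim; apply: functional_extensionality => k.
Qed.

Lemma oexpD x y : oexp (oadd x y) = omul (oexp x) (oexp y).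
Proof.
elim: y => [|y IH|f IH] /=; first by rewrite oadd0l.
- change (omul (oexp (oadd x y)) omega = omul (oexp x) (omul (oexp y) omega)).
  by rewrite IH omulA.
- by rewrite /=; congr Olim; apply: functional_extensionality => k.
Qed.

Lemma ofinS k : ofin k.+1 = Osucc (ofin k).
Proof. by []. Qed.

Lemma oadd_fin a b : oadd (ofin a) (ofin b) = ofin (a + b).
Proof. by elim: b => [|b IH]; rewrite ?addn0 // addnS ofinS /= IH. Qed.

Lemma omul_fin a b : omul (ofin a) (ofin b) = ofin (a * b).
Proof. by elim: b => [|b IH]; rewrite ?muln0 // mulnS ofinS /= IH oadd_fin addnC. Qed.

Lemma omul1l_fin j : omul oone (ofin j) = ofin j.
Proof. by rewrite -[oone]/(ofin 1) omul_fin mul1n. Qed.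

Lemma omul1_omega : omul oone omega = omega.
Proof. by rewrite /omega /=; congr Olim; apply: functional_extensionality => k; rewrite omul1l_fin. Qed.

Lemma oexp1 : oexp oone = omega.
Proof. change (omul oone omega = omega); exact: omul1_omega. Qed.

Lemma oadd_mono_r a y y' : ole y y' -> ole (oadd a y) (oadd a y').
Proof.
apply: (@normal_mono (oadd a) Osucc a) => //.
- exact: ole_S.
- exact: ole_succ.
Qed.

Lemma oadd_infl a b : ole a (oadd a b).
Proof.
apply: (@normal_base (oadd a) Osucc a) => //.
exact: ole_succ.
Qed.

Lemma oadd_infl_l a b : ole b (oadd a b).
Proof.
elim: b => [|b IH|f IH] /=; first exact: ole_z.
- exact: ole_S.
- apply: ole_lim_mono => k; exact: IH.
Qed.

Lemma oadd_mono_l a a' c : ole a a' -> ole (oadd a c) (oadd a' c).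
Proof.
move=> H; elim: c => [|c IH|f IH] //=.
- exact: ole_S.
- exact: ole_lim_mono.
Qed.

Lemma oadd_mono a a' b b' : ole a a' -> ole b b' -> ole (oadd a b) (oadd a' b').
Proof.
move=> H1 H2; apply: ole_trans (oadd_mono_l _ H1) _; exact: oadd_mono_r.
Qed.

Lemma olt_oadd a y : olt Ozero y -> olt a (oadd a y).
Proof.
elim: y => [|y IH|f IH] /=.
- by move/olt_inv_z.
- move=> _; apply: olt_s; exact: oadd_infl.
- move/olt_inv_l=> [k Hk]; apply: (olt_l (k:=k)); exact: IH.
Qed.

Lemma omul_mono_r a y y' : ole y y' -> ole (omul a y) (omul a y').
Proof.
apply: (@normal_mono (omul a) (fun z => oadd z a) Ozero) => //.
- by move=> z z' H; exact: oadd_mono_l.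
- by move=> z; exact: oadd_infl.
Qed.

Lemma omul_mono_l a a' c : ole a a' -> ole (omul a c) (omul a' c).
Proof.
move=> H; elim: c => [|c IH|f IH] /=.
- exact: ole_refl.
- exact: oadd_mono IH H.
- exact: ole_lim_mono.
Qed.

Lemma omul_mono a a' b b' : ole a a' -> ole b b' -> ole (omul a b) (omul a' b').
Proof.
move=> H1 H2; apply: ole_trans (omul_mono_l _ H1) _; exact: omul_mono_r.
Qed.

Lemma omul_omega_infl z : ole z (omul z omega).
Proof.
rewrite /omega /=; apply: (@ole_lim _ _ 1).
by rewrite -[ofin 1]/oone omul1r; exact: ole_refl.
Qed.

Lemma oexp_mono y y' : ole y y' -> ole (oexp y) (oexp y').
Proof.
apply: (@normal_mono oexp (fun z => omul z omega) oone) => //.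
- by move=> z z' H; exact: omul_mono_l.
- exact: omul_omega_infl.
Qed.

Lemma oexp_ge1 y : ole oone (oexp y).
Proof.
apply: (@normal_base oexp (fun z => omul z omega) oone) => //.
exact: omul_omega_infl.
Qed.

Lemma olt0_1 : olt Ozero oone.
Proof. exact: olt_succ. Qed.

Lemma oexp_pos y : olt Ozero (oexp y).
Proof. exact: olt_ole_trans olt0_1 (oexp_ge1 y). Qed.

Lemma omul_fin_lt_omega X j : olt Ozero X -> olt (omul X (ofin j)) (omul X omega).
Proof.
move=> HX; rewrite /omega /=; apply: (olt_l (k:=j.+1)); rewrite ofinS /=.
exact: olt_oadd.
Qed.

Lemma ofin_le_omega j : ole (ofin j) omega.
Proof. exact: ole_lim_k. Qed.



Lemma olt_oexp_S y : olt (oexp y) (oexp (Osucc y)).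
Proof.
have := omul_fin_lt_omega 1 (oexp_pos y).
by rewrite -[ofin 1]/oone omul1r.
Qed.

Lemma ole_oexp_self b : ole b (oexp b).
Proof.
elim: b => [|b IH|f IH]; first exact: ole_z.
- apply: ole_s; exact: ole_olt_trans IH (olt_oexp_S b).
- apply: ole_l => k; apply: ole_trans (IH k) _.
  change (ole (oexp (f k)) (Olim (fun k => oexp (f k)))); exact: ole_lim_k.
Qed.

Lemma below_oexp g B : olt B (oexp g) ->
  olt B oone \/ exists g', olt g' g /\ olt B (oexp (Osucc g')).
Proof.
elim: g B => [|g IH|f IH] B.
- by left.
- by move=> H; right; exists g; split=> //; exact: olt_succ.
- move=> H0; have : olt B (Olim (fun k => oexp (f k))) by [].
  move/olt_inv_l=> [k Hk]; case: (IH k B Hk) => [|[g' [H1 H2]]]; first by left.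
  right; exists g'; split=> //; exact: olt_ole_trans H1 (ole_lim_k _ k).
Qed.

Lemma ell_spec B : ole oone B ->
  ole (oexp (ell B)) B /\ olt B (oexp (Osucc (ell B))).
Proof.
move=> HB; rewrite /ell.
suff Hex : exists g, ole (oexp g) B /\ olt B (oexp (Osucc g)).
  exact: (epsilon_spec ord_inh (fun g => ole (oexp g) B /\ olt B (oexp (Osucc g))) Hex).
pose Q g := olt B (oexp (Osucc g)).
have [g [Qg Hmin]] : exists g, Q g /\ forall g', olt g' g -> ~ Q g'.
  apply: NNPP => Hn.
  have : forall g, ~ Q g.
    move=> g; elim: (olt_wf g) => g0 _ IH Qg0; apply: Hn; exists g0; split=> //.
  move/(_ B); apply; rewrite /Q.
  exact: ole_olt_trans (ole_oexp_self B) (olt_oexp_S B).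
exists g; split=> //.
apply: not_olt_ole => Hlt.
case: (below_oexp Hlt) => [H1|[g' [H1 H2]]].
- exact: ole_olt_false HB H1.
- exact: Hmin H1 H2.
Qed.

Lemma oexp_lt_inv g h : olt (oexp g) (oexp h) -> olt g h.
Proof.
move=> H; case: (ord_total h g) => // Hhg.
by case: (ole_olt_false (oexp_mono Hhg) H).
Qed.

Lemma omul_fin_omega i : ole (omul (ofin i) omega) omega.
Proof.
rewrite /omega /=; apply: ole_l => k; rewrite omul_fin; exact: ofin_le_omega.
Qed.

Lemma omega_le_oexp c : ole oone c -> ole omega (oexp c).
Proof. by move=> H; rewrite -oexp1; apply: oexp_mono. Qed.

Lemma small_exp c : olt c oone -> ole (oexp c) oone.
Proof.
move/olt_inv_s=> H; have := oexp_mono H; done.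
Qed.

Lemma absorb i b : ole oone b -> ole (omul (ofin i) (oexp b)) (oexp b).
Proof.
elim: b => [|c IH|f IH] Hb.
- by move/ole_inv_s/olt_inv_z: Hb.
- change (ole (omul (ofin i) (omul (oexp c) omega)) (omul (oexp c) omega)).
  rewrite omulA; case: (ord_total oone c) => Hc.
  + exact: omul_mono_l (IH Hc).
  + have H1 : ole (omul (ofin i) (oexp c)) (ofin i).
      have := omul_mono_r (ofin i) (small_exp Hc); by rewrite omul1r.
    apply: ole_trans (omul_mono_l _ H1) _.
    apply: ole_trans (omul_fin_omega i) _.
    rewrite -{1}omul1_omega; exact: omul_mono_l (oexp_ge1 c).
- change (ole (Olim (fun k => omul (ofin i) (oexp (f k)))) (Olim (fun k => oexp (f k)))).
  apply: ole_l => k; case: (ord_total oone (f k)) => Hk.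
  + exact: ole_trans (IH k Hk) (ole_lim_k _ k).
  + have H1 : ole (omul (ofin i) (oexp (f k))) (ofin i).
      have := omul_mono_r (ofin i) (small_exp Hk); by rewrite omul1r.
    apply: ole_trans H1 _.
    move/ole_inv_s/olt_inv_l: Hb => [j Hj].
    apply: ole_trans (ofin_le_omega i) _.
    apply: ole_trans (omega_le_oexp (ole_s Hj)) _; exact: ole_lim_k.
Qed.

Lemma ell_mul A B : ole oone A -> ole oone B ->
  ole (ell (omul A B)) (oadd (ell A) (ell B)).
Proof.
move=> HA HB.
have HAB : ole oone (omul A B).
  have := omul_mono HA HB; by rewrite omul1r.
case: (ell_spec HA) => _ HA2; case: (ell_spec HB) => _ HB2.
case: (ell_spec HAB) => HAB1 _.
set a := ell A in HA2 *; set b := ell B in HB2 *.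
have : olt A (Olim (fun k => omul (oexp a) (ofin k))) by [].
move/olt_inv_l=> [i Hi].
have : olt B (Olim (fun k => omul (oexp b) (ofin k))) by [].
move/olt_inv_l=> [j Hj].
suff Hlt : olt (omul A B) (oexp (Osucc (oadd a b))).
  apply: olt_inv_s; apply: oexp_lt_inv; exact: ole_olt_trans HAB1 Hlt.
case: (ord_total oone b) => Hb.
- apply: ole_olt_trans (omul_mono_r A (olt_ole Hj)) _.
  rewrite omulA.
  apply: ole_olt_trans (omul_mono_l _ (omul_mono_l _ (olt_ole Hi))) _.
  rewrite -(omulA (oexp a)).
  apply: ole_olt_trans (omul_mono_l _ (omul_mono_r _ (absorb i Hb))) _.
  rewrite -oexpD; exact: omul_fin_lt_omega _ (oexp_pos _).
- have HB' : ole B (ofin j).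
    apply: ole_trans (olt_ole Hj) _.
    rewrite -{2}(omul1l_fin j); exact: omul_mono_l _ (small_exp Hb).
  apply: ole_olt_trans (omul_mono_r A HB') _.
  apply: ole_olt_trans (omul_mono_l _ (olt_ole Hi)) _.
  rewrite -omulA omul_fin.
  apply: olt_ole_trans (omul_fin_lt_omega _ (oexp_pos a)) _.
  change (ole (oexp (Osucc a)) (oexp (Osucc (oadd a b)))).
  apply: oexp_mono; apply: ole_S; exact: oadd_infl.
Qed.


Lemma mem_In (T : eqType) (x : T) s : x \in s -> List.In x s.
Proof. elim: s => //= a s IH; rewrite inE => /orP [/eqP ->|/IH]; by [left|right]. Qed.

Lemma all_implP T (P : T -> Prop) (q q' : pred T) s :
  (forall a, List.In a s -> P a) -> (forall a, P a -> q a -> q' a) -> all q s -> all q' s.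
Proof.
move=> HP Hq; elim: s HP => //= a s IH HP /andP [Ha Hs]; apply/andP; split.
- by apply: Hq Ha; apply: HP; left.
- by apply: IH => // b Hb; apply: HP; right.
Qed.

Lemma pairwise_implP T (P : T -> Prop) (r r' : rel T) s :
  (forall a, List.In a s -> P a) -> (forall a b, P a -> P b -> r a b -> r' a b) ->
  pairwise r s -> pairwise r' s.
Proof.
move=> HP Hr; elim: s HP => //= a s IH HP /andP [Ha Hs]; apply/andP; split.
- apply: (all_implP (P := P)) Ha; first by move=> b Hb; apply: HP; right.
  by move=> b Pb; apply: Hr => //; apply: HP; left.
- by apply: IH => // b Hb; apply: HP; right.
Qed.

Lemma allrel_flattenr T (r : rel T) xs L :
  allrel r xs (flatten L) = all (allrel r xs) L.
Proof. elim: L => [|A L IH] /=; first exact: allrel0r. by rewrite allrel_catr IH. Qed.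

Lemma pairwise_flatten T (r : rel T) L :
  pairwise r (flatten L) = all (pairwise r) L && pairwise (allrel r) L.
Proof.
elim: L => //= A L IH; rewrite pairwise_cat IH allrel_flattenr.
by rewrite andbCA -!andbA; congr andb; rewrite andbCA.
Qed.

Lemma flatten_map_flatten T (L : seq (seq (seq T))) :
  flatten (map flatten L) = flatten (flatten L).
Proof. by elim: L => //= A L ->; rewrite flatten_cat. Qed.

Lemma all_flatten T (a : pred T) L : all a (flatten L) = all (all a) L.
Proof. by elim: L => //= A L IH; rewrite all_cat IH. Qed.

Lemma choose_list (A B : eqType) (Q : A -> B -> Prop) (l : seq A) :
  (forall a, a \in l -> exists b, Q a b) ->
  exists W : seq (A * B), map fst W = l /\ forall p, p \in W -> Q p.1 p.2.
Proof.
elim: l => [|a l IH] H; first by exists [::].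
case: (H a (mem_head _ _)) => b Hb.
case: IH => [c Hc|W [HW1 HW2]]; first by apply: H; rewrite inE Hc orbT.
exists ((a, b) :: W); split; first by rewrite /= HW1.
by move=> p; rewrite inE => /orP [/eqP -> //|]; apply: HW2.
Qed.

Definition sepb (A B : seq nat) : bool := all (fun u => all (fun v => u < v) B) A.
Definition okE (E : seq nat) : bool := (E != [::]) && fset E.
Definition good (Es : seq (seq nat)) : bool := all okE Es && pairwise sepb Es.

Lemma fset_head_le E u : fset E -> u \in E -> head 0 E <= u.
Proof.
case: E => // a E /andP [/= Hs _]; rewrite inE => /orP [/eqP -> //|Hu].
have := order_path_min ltn_trans Hs; move/allP/(_ u Hu) => /ltnW //.
Qed.

Lemma fset_le_last E u : fset E -> u \in E -> u <= last 0 E.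
Proof.
case/andP=> Hs _; elim: E u Hs => // a E IH u /= Hs.
case: E IH Hs => [|b E] IH Hs; first by rewrite inE => /eqP ->.
have Hs' : sorted ltn (b :: E) by case/andP: Hs.
rewrite inE => /orP [/eqP ->|Hu].
- have := IH b Hs' (mem_head _ _); case/andP: Hs => Hab _ Hb.
  by apply: leq_trans (ltnW Hab) Hb.
- exact: IH u Hs' Hu.
Qed.

Lemma fset_pos E u : fset E -> u \in E -> 0 < u.
Proof. by case/andP=> _ /allP H /H. Qed.

Lemma okE_head E : okE E -> head 0 E \in E.
Proof. by case: E => // a E _ /=; rewrite mem_head. Qed.

Lemma sepb_trans_ok : {in okE & &, transitive sepb}.
Proof.
move=> B A C HB HA HC /allP H1 /allP H2; apply/allP => u Hu; apply/allP => v Hv.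
have hB := okE_head HB.
have := H1 u Hu; move/allP/(_ _ hB) => H3.
have := H2 _ hB; move/allP/(_ _ Hv) => H4.
exact: ltn_trans H3 H4.
Qed.

Lemma adm_good M Es : adm M Es -> good Es.
Proof.
case=> Hall [Hs _]; rewrite /good Hall /=.
rewrite -(sorted_pairwise_in sepb_trans_ok Hall).
case: Es Hall Hs => // A Es; elim: Es A => // B Es IH A /= /and3P [HA HB HEs] /andP [HAB HBs].
apply/andP; split; last by apply: IH => //=; rewrite HB.
case/andP: HA => _ fA; case/andP: HB => _ fB.
apply/allP => u Hu; apply/allP => v Hv.
apply: leq_ltn_trans (fset_le_last fA Hu) _; apply: leq_trans HAB (fset_head_le fB Hv).
Qed.

Lemma good_adm M Es : good Es -> M (map (head 0) Es) -> adm M Es.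
Proof.
case/andP=> Hall Hp HM; split=> //; split=> //.
case: Es Hall Hp {HM} => // A Es; elim: Es A => // B Es IH A /= /and3P [HA HB HEs] /andP [/andP [HAB _] HBs].
apply/andP; split; last by apply: IH => //=; rewrite ?HB //.
have hB := okE_head HB.
case: A HA HAB => // a A HA /allP HAB.
have := HAB (last a A) (mem_last _ _); move/allP/(_ _ hB) => //.
Qed.

Lemma good_fset Es : good Es -> fset (flatten Es).
Proof.
case/andP=> Hall Hp; apply/andP; split.
- rewrite (sorted_pairwise ltn_trans) pairwise_flatten; apply/andP; split.
  + apply/allP => E /(allP Hall) /andP [_ /andP [HE _]].
    by rewrite -(sorted_pairwise ltn_trans).
  + apply: (pairwise_implP (P := fun _ => True)) Hp; first by [].
    by move=> A B _ _.
- rewrite all_flatten; apply/allP => E /(allP Hall) /andP [_ /andP [_ HE]] //.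
Qed.

Lemma adm_fset M Es : adm M Es -> fset (flatten Es).
Proof. by move/adm_good/good_fset. Qed.

Lemma comp_mono (M M' N N' : fam) s :
  (forall t, M t -> M' t) -> (forall t, N t -> N' t) -> Defs.comp M N s -> Defs.comp M' N' s.
Proof.
move=> HM HN [Es [[H1 [H2 H3]] [H4 H5]]]; exists Es; split; last split => //.
- by split=> //; split=> //; apply: HM.
- by move=> E /H4; apply: HN.
Qed.

Lemma In_mem (T : eqType) (x : T) s : List.In x s -> x \in s.
Proof. elim: s => //= a s IH [->|/IH H]; rewrite inE ?eqxx ?H ?orbT //. Qed.

Lemma okE_heads Ps : good Ps -> Ps != [::] -> okE (map (head 0) Ps).
Proof.
case/andP=> Hall Hp HPs; apply/andP; split; first by case: Ps Hall Hp HPs.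
apply/andP; split.
- rewrite (sorted_pairwise ltn_trans) pairwise_map.
  apply: (pairwise_implP (P := fun E => okE E)) Hp.
    by move=> a /In_mem Ha; apply: (allP Hall).
  move=> A B HA HB /allP H; have := H _ (okE_head HA); move/allP; apply.
  exact: okE_head.
- apply/allP => u /mapP [E /(allP Hall) HE ->]; have hE := okE_head HE.
  case/andP: HE => _ fE; exact: fset_pos fE hE.
Qed.

Lemma head_flatten (Ps : seq (seq nat)) : all okE Ps -> head 0 (flatten Ps) = head 0 (map (head 0) Ps).
Proof. by case: Ps => // [[|a P] Ps] //=. Qed.

Lemma comp_assoc M N P s :
  Defs.comp M (Defs.comp N P) s -> Defs.comp (Defs.comp M N) P s.
Proof.
case=> As [HadmA [HAs ->]].
have [W [HW1 HW2]] := choose_list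
  (Q := fun A Ps => [/\ A = flatten Ps, adm N Ps & forall E, E \in Ps -> P E]) (l := As)
  (fun A HA => match HAs A HA with ex_intro Ps (conj H1 (conj H2 H3)) =>
     ex_intro _ Ps (And3 H3 H1 H2) end).
have gA := adm_good HadmA.
have okA : forall p, p \in W -> okE p.1.
  move=> p Hp; have : p.1 \in As by rewrite -HW1; apply: map_f.
  by move/(allP (andP gA).1).
have neW : forall p, p \in W -> p.2 != [::].
  by move=> p Hp; have := okA p Hp; case: (HW2 p Hp) => -> _ _; case: p.2.
have gW : forall p, p \in W -> good p.2.
  by move=> p Hp; case: (HW2 p Hp) => _ /adm_good.
set Qs := flatten (map snd W).
have Hflat : flatten As = flatten Qs.
  rewrite -HW1 /Qs -flatten_map_flatten -map_comp; congr flatten.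
  by apply/eq_in_map => p /HW2 [-> _ _].
have Hpw : pairwise (relpre fst sepb) W by rewrite -pairwise_map HW1; case/andP: gA.
exists Qs; split; last split => //.
- apply: good_adm.
  + apply/andP; split.
    * rewrite all_flatten; apply/allP => Ps /mapP [p Hp ->].
      by case/andP: (gW p Hp).
    * rewrite pairwise_flatten; apply/andP; split.
      - apply/allP => Ps /mapP [p Hp ->]; by case/andP: (gW p Hp).
      - rewrite pairwise_map.
        apply: (pairwise_implP (P := fun p => p \in W)) Hpw; first by move=> a /In_mem.
        move=> p1 p2 Hp1 Hp2; rewrite /relpre /=.
        case: (HW2 _ Hp1) => e1 _ _; case: (HW2 _ Hp2) => e2 _ _; rewrite e1 e2 => /allP Hsep.
        apply/allP => E HE; apply/allP => E' HE'; apply/allP => u Hu; apply/allP => v Hv.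
        have Hu' : u \in flatten p1.2 by apply/flattenP; exists E.
        have Hv' : v \in flatten p2.2 by apply/flattenP; exists E'.
        by have := Hsep u Hu'; move/allP/(_ v Hv').
  + exists (map (fun p => map (head 0) p.2) W); split; last split.
    * apply: good_adm.
      - apply/andP; split.
        + apply/allP => E /mapP [p Hp ->]; exact: okE_heads (gW p Hp) (neW p Hp).
        + rewrite pairwise_map.
          apply: (pairwise_implP (P := fun p => p \in W)) Hpw; first by move=> a /In_mem.
          move=> p1 p2 Hp1 Hp2; rewrite /relpre /=.
          case: (HW2 _ Hp1) => e1 _ _; case: (HW2 _ Hp2) => e2 _ _; rewrite e1 e2 => /allP Hsep.
          apply/allP => u /mapP [E HE ->]; apply/allP => v /mapP [E' HE' ->].
          have okE1 : okE E by apply: (allP (andP (gW _ Hp1)).1).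
          have okE2 : okE E' by apply: (allP (andP (gW _ Hp2)).1).
          have Hu' : head 0 E \in flatten p1.2 by apply/flattenP; exists E => //; apply: okE_head.
          have Hv' : head 0 E' \in flatten p2.2 by apply/flattenP; exists E' => //; apply: okE_head.
          by have := Hsep _ Hu'; move/allP/(_ _ Hv').
      - have -> : map (head 0) (map (fun p => map (head 0) p.2) W) = map (head 0) As.
          rewrite -HW1 -!map_comp; apply/eq_in_map => p Hp /=.
          case: (HW2 _ Hp) => -> _ _; rewrite head_flatten //; by case/andP: (gW p Hp).
        by case: HadmA => _ [].
    * move=> E /mapP [p Hp ->]; by case: (HW2 _ Hp) => _ [_ [_]].
    * by rewrite /Qs map_flatten -map_comp.
- move=> E /flattenP [Ps /mapP [p Hp ->] HE]; case: (HW2 _ Hp) => _ _; by apply.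
Qed.

Lemma comp_S0 M t : Defs.comp M S0 t -> Defs.comp S0 M t.
Proof.
case=> Es [HE [HS ->]].
have Hf := adm_fset HE.
have HEs : Es = map (fun k => [:: k]) (map (head 0) Es).
  rewrite -map_comp -{1}(map_id Es); apply/eq_in_map => E HE0 /=.
  case: HE => /allP /(_ E HE0) /andP [Hne _] _.
  have /andP [_] := HS E HE0.
  by case: E {HE0} Hne => [|a [|b E]].
have Hflat : flatten Es = map (head 0) Es.
  by rewrite {1}HEs; elim: (map (head 0) Es) => //= a l ->.
case Ht: (flatten Es) => [|a t'].
- exists [::]; split; last by split=> //; rewrite Ht.
  by split=> //; split=> //.
- exists [:: a :: t']; split; last split.
  + split; first by rewrite /= andbT -Ht Hf.
    split=> //.
    move: Hf; rewrite Ht => /andP [_ /= /andP [Ha _]].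
    by rewrite /S0 /fset /= Ha.
  + by move=> E; rewrite inE => /eqP ->; rewrite -Ht Hflat; case: HE => _ [].
  + by rewrite /= cats0.
Qed.

Lemma foldl_comp_mono Ms (B B' : fam) s :
  (forall t, B t -> B' t) -> foldl Defs.comp B Ms s -> foldl Defs.comp B' Ms s.
Proof.
move=> HB; elim/last_ind: Ms s => [|Ms P IH] s; first exact: HB.
rewrite !foldl_rcons; apply: comp_mono => //; exact: IH.
Qed.

Lemma assoc_gen Ms M (B B' : fam) :
  (forall t, Defs.comp M B t -> B' t) ->
  forall s, Defs.comp M (foldl Defs.comp B Ms) s -> foldl Defs.comp B' Ms s.
Proof.
move=> HB; elim/last_ind: Ms => [|Ms P IH] s; first exact: HB.
rewrite !foldl_rcons => /comp_assoc; apply: comp_mono => //; exact: IH.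
Qed.

Lemma comp_list_cons M Ms s :
  Defs.comp M (comp_list Ms) s -> comp_list (M :: Ms) s.
Proof. apply: assoc_gen; exact: comp_S0. Qed.

Lemma comp_list_nil Ms : comp_list Ms [::].
Proof.
elim/last_ind: Ms => [|Ms P IH]; first by [].
rewrite /comp_list foldl_rcons; exists [::]; split=> //.
Qed.

Lemma comp_list_single k : 0 < k -> comp_list [::] [:: k].
Proof. by move=> Hk; rewrite /comp_list /= /S0 /fset /= Hk. Qed.

Lemma comp_fset M N s : Defs.comp M N s -> fset s.
Proof. by case=> Es [HE [_ ->]]; exact: adm_fset HE. Qed.


Definition tree_ind2 (P : tree -> Prop)
  (H : forall E n ch, (forall c, List.In c ch -> P c) -> P (Node E n ch)) : forall t, P t :=
  fix go t := match t with Node E n ch => H E n ch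
    ((fix goL (l : seq tree) : forall c, List.In c l -> P c :=
       match l with
       | [::] => fun c (Hc : List.In c [::]) => False_ind (P c) Hc
       | c0 :: l' => fun c Hc => match Hc with
           | or_introl e => eq_ind c0 P (go c0) c e
           | or_intror Hc' => goL l' c Hc' end
       end) ch) end.

Lemma map_eq_In T U (f g : T -> U) l :
  (forall c, List.In c l -> f c = g c) -> map f l = map g l.
Proof.
elim: l => //= a l IH H; rewrite (H a (or_introl erefl)) IH // => c Hc; apply: H; by right.
Qed.

Lemma all_In T (p : pred T) l : (forall c, List.In c l -> p c) -> all p l.
Proof.
elim: l => //= a l IH H; rewrite (H a (or_introl erefl)) IH // => c Hc; apply: H; by right.
Qed.

Lemma mem_flatten_map_In T (U : eqType) (f : T -> seq U) l u :
  u \in flatten (map f l) -> exists c, List.In c l /\ u \in f c.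
Proof.
elim: l => //= a l IH; rewrite mem_cat => /orP [H|/IH [c [H1 H2]]].
- by exists a; split=> //; left.
- by exists c; split=> //; right.
Qed.

Lemma mem_map_In T (U : eqType) (f : T -> U) l u :
  u \in map f l -> exists c, List.In c l /\ u = f c.
Proof.
elim: l => //= a l IH; rewrite inE => /orP [/eqP H|/IH [c [H1 H2]]].
- by exists a; split=> //; left.
- by exists c; split=> //; right.
Qed.

Lemma In_map T U (f : T -> U) l c : List.In c l -> List.In (f c) (map f l).
Proof. elim: l => //= a l IH [->|H]; [by left | right; exact: IH]. Qed.

Lemma leavesE E n ch h : leaves (Node E n ch) h =
  if ch is [::] then [:: (E, h)] else flatten (map (fun c => leaves c (rcons h n)) ch).
Proof. case: ch => //= c ch; congr cat; by elim: ch => //= c' ch ->. Qed.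

Lemma leaves_hist t : forall h, leaves t h = map (fun l => (l.1, h ++ l.2)) (leaves t [::]).
Proof.
elim/tree_ind2: t => E n ch IH h; rewrite !leavesE.
case: ch IH => [|c ch] IH; first by rewrite /= cats0.
rewrite map_flatten -map_comp; congr flatten; apply: map_eq_In => c' Hc' /=.
rewrite (IH c' Hc' (rcons h n)) (IH c' Hc' [:: n]) -map_comp.
by apply: eq_map => l /=; rewrite cat_rcons.
Qed.

Section TreeF.
Variable F : nat -> fam.
Hypothesis Freg : forall k, 1 <= k -> regular (F k).

Lemma tree_admE E n ch : tree_adm F (Node E n ch) ->
  [/\ fset E, ch = [::] \/ [/\ 1 <= n, adm (F n) (map node_set ch) &
        forall E', E' \in map node_set ch -> {subset E' <= E}]
    & forall c, List.In c ch -> tree_adm F c].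
Proof.
move=> /= [H1 [H2 H3]]; split=> //.
elim: ch {H2} H3 => //= c ch IH [Hc Hch] c' [<- //|]; exact: IH.
Qed.

Lemma leaves_prop t : tree_adm F t -> forall l, l \in leaves t [::] ->
  [/\ fset l.1, {subset l.1 <= node_set t} & posl l.2].
Proof.
elim/tree_ind2: t => E n ch IH /tree_admE [HE Hch Hc] l; rewrite leavesE.
case: ch IH Hch Hc => [|c0 ch] IH Hch Hc.
- by rewrite inE => /eqP -> /=; split.
- case: Hch => // [[Hn Hadm Hsub]].
  move/mem_flatten_map_In => [c [Hin]]; rewrite leaves_hist => /mapP [l' Hl' ->] /=.
  case: (IH c Hin (Hc c Hin) l' Hl') => H1 H2 H3; split=> //.
  + move=> u /H2; apply: Hsub; apply: In_mem; exact: In_map.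
  + by rewrite /posl /= Hn.
Qed.

Definition lrel (l l' : seq nat * seq nat) := sepb l.1 l'.1.

Lemma leaves_pairwise t : tree_adm F t -> pairwise lrel (leaves t [::]).
Proof.
elim/tree_ind2: t => E n ch IH /tree_admE [HE Hch Hc]; rewrite leavesE.
case: ch IH Hch Hc => [|c0 ch] IH Hch Hc; first by [].
case: Hch => // [[Hn Hadm Hsub]].
set ch' := c0 :: ch in IH Hadm Hsub Hc *.
rewrite pairwise_flatten; apply/andP; split.
- rewrite all_map; apply: all_In => c Hin /=.
  by rewrite leaves_hist pairwise_map; exact: IH c Hin (Hc c Hin).
- rewrite pairwise_map.
  have := (andP (adm_good Hadm)).2; rewrite pairwise_map.
  apply: (pairwise_implP (P := fun c => List.In c ch')); first by [].
  move=> c1 c2 H1 H2; rewrite /relpre /= => /allP Hs.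
  apply/allP => l1; rewrite leaves_hist => /mapP [l1' Hl1 ->].
  apply/allP => l2; rewrite leaves_hist => /mapP [l2' Hl2 ->].
  rewrite /lrel /=.
  case: (leaves_prop (Hc c1 H1) Hl1) => _ S1 _; case: (leaves_prop (Hc c2 H2) Hl2) => _ S2 _.
  apply/allP => u /S1 Hu; apply/allP => v /S2 Hv.
  by have := Hs u Hu; move/allP/(_ v Hv).
Qed.

Lemma pairwise_sep_uniq L : pairwise lrel L -> all (fun l => fset l.1) L ->
  uniq (flatten (map fst L)).
Proof.
elim: L => //= l L IH /andP [Hl HL] /andP [Hf Hfs]; rewrite cat_uniq IH // andbT.
apply/andP; split; first by case/andP: Hf => Hs _; exact: (sorted_uniq ltn_trans ltnn).
apply/hasPn => v /flattenP [A /mapP [l' Hl' ->] Hv]; apply/negP => Hv'.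
have := allP Hl l' Hl'; rewrite /lrel => /allP /(_ v Hv') /allP /(_ v Hv).
by rewrite ltnn.
Qed.

Lemma comp_list_fset Ms s : comp_list Ms s -> fset s.
Proof.
elim/last_ind: Ms => [|Ms P IH]; first by case/andP.
rewrite /comp_list foldl_rcons; exact: comp_fset.
Qed.

Variables (pk : seq nat -> nat) (ok : seq nat -> bool).
Hypothesis pk_in : forall E, ok E -> pk E \in E.

Definition pts t h := [seq pk l.1 | l <- leaves t [::] & (l.2 == h) && ok l.1].

Lemma flatten_filter_nil (L : seq (seq nat)) :
  flatten [seq A <- L | A != [::]] = flatten L.
Proof. by elim: L => //= [[|a A] L IH] //=; rewrite IH. Qed.

Lemma pts_node E n c0 ch j h :
  pts (Node E n (c0 :: ch)) (j :: h) =
  if j == n then flatten (map (fun c => pts c h) (c0 :: ch)) else [::].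
Proof.
rewrite /pts leavesE filter_flatten map_flatten -!map_comp.
case: eqP => [->|Hjn].
- congr flatten; apply: eq_map => c /=.
  rewrite leaves_hist filter_map -map_comp; congr map; apply: eq_filter => l /=.
  by rewrite eqseq_cons eqxx.
- elim: (c0 :: ch) => //= c L ->; rewrite cats0.
  rewrite leaves_hist filter_map.
  suff -> : [seq l <- leaves c [::] | preim (fun l => (l.1, [:: n] ++ l.2))
              (fun l => (l.2 == j :: h) && ok l.1) l] = [::] by [].
  apply/eqP; rewrite -(negbK (_ == _)) -has_filter; apply/hasPn => l _ /=.
  by rewrite eqseq_cons eq_sym; case: eqP.
Qed.

Lemma pts_node_nil E n c0 ch :
  pts (Node E n (c0 :: ch)) [::] = [::].
Proof.
rewrite /pts leavesE filter_flatten map_flatten -!map_comp.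
elim: (c0 :: ch) => //= c L ->; rewrite cats0 leaves_hist filter_map.
suff -> : [seq l <- leaves c [::] | preim (fun l => (l.1, [:: n] ++ l.2))
            (fun l => (l.2 == [::]) && ok l.1) l] = [::] by [].
apply/eqP; rewrite -(negbK (_ == _)) -has_filter; apply/hasPn => l _ //.
Qed.

Lemma pts_leaf E n h :
  pts (Node E n [::]) h = if (h == [::]) && ok E then [:: pk E] else [::].
Proof. by rewrite /pts leavesE /= eq_sym; case: ifP. Qed.

Lemma pts_main t : tree_adm F t -> forall h,
  comp_list [seq F i | i <- h] (pts t h) /\ {subset pts t h <= node_set t}.
Proof.
elim/tree_ind2: t => E n ch IH /tree_admE [HE Hch Hc] h.
case: ch IH Hch Hc => [|c0 ch] IH Hch Hc.
- rewrite pts_leaf; case: ifP => [/andP [/eqP -> HokE]|_]; last first.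
    by split=> //; exact: comp_list_nil.
  have HpE := pk_in HokE.
  split; last by move=> u; rewrite inE => /eqP ->.
  by apply: comp_list_single; exact: fset_pos HE HpE.
- case: Hch => // [[Hn Hadm Hsub]].
  set ch' := c0 :: ch in IH Hadm Hsub Hc *.
  case: h => [|j h]; first by rewrite /ch' pts_node_nil; split=> //; exact: comp_list_nil.
  rewrite /ch' pts_node -/ch'; case: eqP => [Hjn|_]; last by split=> //; exact: comp_list_nil.
  subst j.
  have IHc : forall c, List.In c ch' ->
      comp_list [seq F i | i <- h] (pts c h) /\ {subset pts c h <= node_set c}.
    by move=> c Hin; apply: IH Hin (Hc c Hin) h.
  have Hnode : forall c, List.In c ch' -> {subset node_set c <= E}.
    by move=> c Hin; apply: Hsub; apply: In_mem; exact: In_map.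
  have Hfc : forall c, List.In c ch' -> fset (node_set c).
    by move=> c Hin; case: c Hin => E' n' ch'' Hin; case: (tree_admE (Hc _ Hin)).
  split; last first.
    move=> u /mem_flatten_map_In [c [Hin Hu]]; apply: (Hnode c Hin).
    exact: (IHc c Hin).2.
  apply: comp_list_cons.
  set Es := [seq A <- map (fun c => pts c h) ch' | A != [::]].
  have HEs : forall A, A \in Es -> exists c, List.In c ch' /\ A = pts c h /\ A != [::].
    move=> A; rewrite mem_filter => /andP [HA /mem_map_In [c [Hin HAc]]].
    by exists c; rewrite -HAc.
  exists Es; split; last split.
  + apply: good_adm.
    * apply/andP; split.
      - apply/allP => A /HEs [c [Hin [-> HA]]]; rewrite /okE HA /=.
        exact: comp_list_fset (IHc c Hin).1.
      - apply: pairwise_filter; rewrite pairwise_map.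
        have := (andP (adm_good Hadm)).2; rewrite pairwise_map.
        apply: (pairwise_implP (P := fun c => List.In c ch')); first by [].
        move=> c1 c2 H1 H2; rewrite /relpre /= => /allP Hs.
        apply/allP => u /(IHc c1 H1).2 Hu; apply/allP => v /(IHc c2 H2).2 Hv.
        by have := Hs u Hu; move/allP/(_ v Hv).
    *
      set q := fun c => pts c h != [::].
      set W := [seq (head 0 (node_set c), head 0 (pts c h)) | c <- ch' & q c].
      have Hsnd : map (head 0) Es = map snd W.
        by rewrite /Es /W filter_map -!map_comp.
      have HW : all (fun p => p.1 <= p.2) W.
        rewrite /W all_map all_filter; apply: all_In => c Hin'; apply/implyP => Hq.
        rewrite /=; apply: fset_head_le (Hfc c Hin') _; apply: (IHc c Hin').2.
        by rewrite /q in Hq; case: (pts c h) Hq => //= a l _; rewrite mem_head.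
      have Hsub1 : subseq (map fst W) (map (head 0) (map node_set ch')).
        rewrite /W -map_comp filter_mask map_mask -map_comp; exact: mask_subseq.
      have [Hher Hspr Hcpt] := Freg Hn.
      have HadmS := Hadm; case: HadmS => Hall [Hsrt HFS].
      have Hf0 : fset (map (head 0) (map node_set ch')).
        have := okE_heads (adm_good Hadm); rewrite /okE; case: (map node_set ch') => //.
        by move=> A L /(_ isT) /andP [].
      have HT : F n (map fst W).
        apply: Hher HFS _ (mem_subseq Hsub1).
        case/andP: Hf0 => Hs0 Hp0; apply/andP; split.
        - exact: (subseq_sorted ltn_trans Hsub1 Hs0).
        - apply/allP => u /(mem_subseq Hsub1) Hu; exact: (allP Hp0).
      rewrite Hsnd; apply: Hspr HT _ _ _.
      - rewrite -Hsnd; case HE0: Es => [|A L]; first by [].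
        have : good Es.
          apply/andP; split.
          + apply/allP => A' /HEs [c [Hin [-> HA]]]; rewrite /okE HA /=.
            exact: comp_list_fset (IHc c Hin).1.
          + apply: pairwise_filter; rewrite pairwise_map.
            have := (andP (adm_good Hadm)).2; rewrite pairwise_map.
            apply: (pairwise_implP (P := fun c => List.In c ch')); first by [].
            move=> c1 c2 H1 H2; rewrite /relpre /= => /allP Hs.
            apply/allP => u /(IHc c1 H1).2 Hu; apply/allP => v /(IHc c2 H2).2 Hv.
            by have := Hs u Hu; move/allP/(_ v Hv).
        by rewrite HE0 => /okE_heads /(_ isT) /andP [].
      - by rewrite !size_map.
      - move=> i Hi; rewrite size_map in Hi.
        rewrite (nth_map (0, 0)) // (nth_map (0, 0)) //.
        exact: (allP HW) _ (mem_nth _ Hi).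
  + move=> A /HEs [c [Hin [-> _]]]; exact: (IHc c Hin).1.
  + by rewrite flatten_filter_nil.
Qed.

End TreeF.


Section R1sec.
Local Open Scope ring_scope.

Fixpoint seqs_upto (A : seq nat) (L : nat) : seq (seq nat) :=
  if L is L'.+1 then [::] :: [seq a :: s | a <- A, s <- seqs_upto A L'] else [:: [::]].

Lemma mem_seqs_upto A L s : (size s <= L)%N -> all (mem A) s -> s \in seqs_upto A L.
Proof.
elim: L s => [|L IH] [|a s] //= Hs /andP [Ha HA].
rewrite inE; apply/orP; right; apply: allpairs_f => //; exact: IH.
Qed.

Lemma ord_max_list (f : seq nat -> ord) (s : seq (seq nat)) : s != [::] ->
  exists2 x, x \in s & forall y, y \in s -> ole (f y) (f x).
Proof.
elim: s => // a s IH _; case: (eqVneq s [::]) => [->|Hs].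
  by exists a; rewrite ?mem_head // => y; rewrite inE => /eqP ->; exact: ole_refl.
case: (IH Hs) => x Hx Hmax; case: (ord_total (f a) (f x)) => H.
- exists x; first by rewrite inE Hx orbT.
  by move=> y; rewrite inE => /orP [/eqP ->|/Hmax].
- exists a; first exact: mem_head.
  move=> y; rewrite inE => /orP [/eqP ->|/Hmax Hy]; first exact: ole_refl.
  exact: ole_trans Hy (olt_ole H).
Qed.

Section Reals.
Variable R : realType.
Variable theta : nat -> R.
Hypothesis Hth : forall k, (1 <= k)%N -> 0 < theta k < 1.
Hypothesis Hmono : forall k, (1 <= k)%N -> theta k.+1 <= theta k.
Hypothesis Hnull : forall e, 0 < e -> exists N, forall k, (N <= k)%N -> theta k < e.

Lemma th_pos k : (1 <= k)%N -> 0 < theta k.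
Proof. by move=> Hk; case/andP: (Hth Hk). Qed.
Lemma th_lt1 k : (1 <= k)%N -> theta k < 1.
Proof. by move=> Hk; case/andP: (Hth Hk). Qed.
Lemma th_ge0 k : (1 <= k)%N -> 0 <= theta k.
Proof. by move=> Hk; apply: ltW; exact: th_pos. Qed.
Lemma th_le1 k : (1 <= k)%N -> theta k <= 1.
Proof. by move=> Hk; apply: ltW; exact: th_lt1. Qed.

Lemma th_anti a b : (1 <= a)%N -> (a <= b)%N -> theta b <= theta a.
Proof.
move=> Ha; elim: b => [|b IH]; first by rewrite leqn0 => /eqP Ha0; rewrite Ha0 in Ha.
rewrite leq_eqVlt => /orP [/eqP <-|Hab]; first by [].
apply: le_trans (Hmono _) (IH Hab); exact: leq_trans Ha Hab.
Qed.

Lemma tagp_nil : tagp theta [::] = 1.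
Proof. by rewrite /tagp big_nil. Qed.
Lemma tagp_cons a s : tagp theta (a :: s) = theta a * tagp theta s.
Proof. by rewrite /tagp big_cons. Qed.
Lemma tagp_cat s1 s2 : tagp theta (s1 ++ s2) = tagp theta s1 * tagp theta s2.
Proof. by rewrite /tagp big_cat. Qed.

Lemma tagp_pos s : posl s -> 0 < tagp theta s.
Proof.
elim: s => [|a s IH]; first by rewrite tagp_nil.
by rewrite /posl /= => /andP [Ha Hs]; rewrite tagp_cons mulr_gt0 ?th_pos ?IH.
Qed.

Lemma tagp_le1 s : posl s -> tagp theta s <= 1.
Proof.
elim: s => [|a s IH]; first by rewrite tagp_nil.
rewrite /posl /= => /andP [Ha Hs]; rewrite tagp_cons.
apply: mulr_ile1; [exact: th_ge0 | exact: ltW (tagp_pos Hs) | exact: th_le1 | exact: IH].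
Qed.

Lemma tagp_le_elem s k : posl s -> k \in s -> tagp theta s <= theta k.
Proof.
elim: s => // a s IH; rewrite /posl /= => /andP [Ha Hs]; rewrite tagp_cons inE.
case/orP => [/eqP ->|Hk].
- by apply: ler_piMr; [exact: th_ge0 | exact: tagp_le1].
- apply: le_trans (IH Hs Hk); apply: ler_piMl; [exact: ltW (tagp_pos Hs) | exact: th_le1].
Qed.

Lemma tagp_le_pow s : posl s -> tagp theta s <= theta 1 ^+ size s.
Proof.
elim: s => [|a s IH]; first by rewrite tagp_nil.
rewrite /posl /= => /andP [Ha Hs]; rewrite tagp_cons exprS.
apply: ler_pM; [exact: th_ge0 | exact: ltW (tagp_pos Hs) | exact: th_anti | exact: IH].
Qed.

Lemma tagp_prefix s i : posl s -> tagp theta s <= tagp theta (take i s).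
Proof.
move=> Hs; rewrite -{1}(cat_take_drop i s) tagp_cat.
have Hd : posl (drop i s) by move: Hs; rewrite -{1}(cat_take_drop i s) /posl all_cat => /andP [].
have Ht : posl (take i s) by move: Hs; rewrite -{1}(cat_take_drop i s) /posl all_cat => /andP [].
by apply: ler_piMr; [exact: ltW (tagp_pos Ht) | exact: tagp_le1].
Qed.

Lemma pow_small (t c : R) : 0 < t < 1 -> 0 < c -> exists L : nat, t ^+ L < c.
Proof.
case/andP=> Ht0 Ht1 Hc.
set d := t^-1 - 1.
have Hd : 0 < d by rewrite /d subr_gt0 invf_gt1.
have Hbern : forall L : nat, 1 + L%:R * d <= (1 + d) ^+ L.
  elim=> [|L IH]; first by rewrite mul0r addr0 expr0.
  rewrite exprS; apply: le_trans (_ : (1 + d) * (1 + L%:R * d) <= _); last first.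
    by apply: ler_wpM2l; rewrite ?IH // addr_ge0 // ltW.
  rewrite -natr1.
  have : 0 <= d * (L%:R * d) by apply: mulr_ge0; [exact: ltW | apply: mulr_ge0; [exact: ler0n | exact: ltW]].
  lra.
have Htd : t * (1 + d) = 1 by rewrite /d addrC subrK divff // gt_eqF.
pose L := Num.bound (c^-1 / d).
have HL : c^-1 / d < L%:R by apply: archi_boundP; rewrite divr_ge0 // ltW ?invr_gt0.
exists L.
have HtL : 0 < t ^+ L by apply: exprn_gt0.
have H1 : t ^+ L * (1 + d) ^+ L = 1 by rewrite -exprMn Htd expr1n.
have H2 : c^-1 < L%:R * d by rewrite -ltr_pdivrMr.
have H3 : t ^+ L * c^-1 < 1.
  rewrite -H1 ltr_pM2l //; apply: lt_le_trans (Hbern L).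
  lra.
by move: H3; rewrite -/(_ / c) ltr_pdivrMr // mul1r.
Qed.

Lemma fin_tag (c : R) : 0 < c ->
  exists L : seq (seq nat), forall ns, posl ns -> c < tagp theta ns -> ns \in L.
Proof.
move=> Hc; case: (Hnull Hc) => N HN.
have H1 : 0 < theta 1 < 1 by apply: Hth.
case: (pow_small H1 Hc) => L0 HL0.
exists (seqs_upto (iota 1 N) L0) => ns Hns Htg.
apply: mem_seqs_upto.
- rewrite leqNgt; apply/negP => Hsz.
  have : tagp theta ns <= theta 1 ^+ L0.
    apply: le_trans (tagp_le_pow Hns) _.
    apply: ler_wiXn2l; [exact: th_ge0 | exact: th_le1 | exact: ltnW].
  move=> H; have := lt_le_trans Htg (le_trans H (ltW HL0)); by rewrite ltxx.
- apply/allP => k Hk; change (k \in iota 1 N); rewrite mem_iota.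
  have Hk1 : (1 <= k)%N by move/allP: Hns => /(_ k Hk).
  rewrite Hk1 /= add1n ltnS leqNgt; apply/negP => HkN.
  have := HN k (ltnW HkN); have := tagp_le_elem Hns Hk => H1' H2'.
  have := lt_le_trans Htg H1' => H3; have := lt_trans H3 H2'; by rewrite ltxx.
Qed.

Lemma enum_P (P : seq nat -> Prop) (c : R) : 0 < c ->
  (forall ns, P ns -> posl ns /\ c < tagp theta ns) ->
  exists s, uniq s /\ forall ns, P ns <-> ns \in s.
Proof.
move=> Hc HP; case: (fin_tag Hc) => L HL.
exists [seq ns <- undup L | `[< P ns >]]; split; first by rewrite filter_uniq ?undup_uniq.
move=> ns; rewrite mem_filter mem_undup; split.
- by move=> Hns; case: (HP ns Hns) => H1 H2; rewrite HL // andbT; apply/asboolP.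
- by case/andP=> /asboolP.
Qed.

Lemma card_spec (P : seq nat -> Prop) (c : R) : 0 < c ->
  (forall ns, P ns -> posl ns /\ c < tagp theta ns) ->
  exists s, [/\ uniq s, forall ns, P ns <-> ns \in s & size s = card_of P].
Proof.
move=> Hc HP; case: (enum_P Hc HP) => s [Hu Hs].
have Hex : exists k, exists s : seq (seq nat), [/\ uniq s, (forall ns, P ns <-> ns \in s) & size s = k].
  by exists (size s), s.
exact: (epsilon_spec (inhabits 0%N) _ Hex).
Qed.

Lemma gamma_spec (alpha : nat -> ord) (eps : R) m : (1 <= m)%N -> 0 < eps ->
  is_gamma theta alpha eps m (gamma theta alpha eps m).
Proof.
move=> Hm He; rewrite /gamma.
suff Hex : exists g, is_gamma theta alpha eps m g.
  exact: (epsilon_spec ord_inh _ Hex).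
pose P := fun ns => posl ns /\ theta m < eps * tagp theta ns.
have Hc : 0 < theta m / eps by rewrite divr_gt0 ?th_pos.
have HP : forall ns, P ns -> posl ns /\ theta m / eps < tagp theta ns.
  by move=> ns [H1 H2]; split=> //; rewrite ltr_pdivrMr // mulrC.
case: (enum_P Hc HP) => s [Hu Hs].
case: (eqVneq s [::]) => [Hs0|Hs0].
- exists Ozero; split.
  + by move=> ns /Hs; rewrite Hs0.
  + by right; split=> // ns /Hs; rewrite Hs0.
- case: (ord_max_list (fun ns => ell (prodA alpha ns)) Hs0) => x Hx Hmax.
  exists (ell (prodA alpha x)); split.
  + by move=> ns /Hs /Hmax.
  + left; exists x; split; first exact/Hs.
    split; exact: ole_refl.
Qed.

Variable x : nat -> R.

Lemma c0_cons a E : c0norm_on (a :: E) x = Num.max `|x a| (c0norm_on E x).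
Proof. by rewrite /c0norm_on big_cons. Qed.
Lemma c0_nil : c0norm_on [::] x = 0.
Proof. by rewrite /c0norm_on big_nil. Qed.

Lemma c0_ge0 E : 0 <= c0norm_on E x.
Proof.
elim: E => [|a E IH]; first by rewrite c0_nil.
by rewrite c0_cons le_max IH orbT.
Qed.

Lemma c0_le_sum E : c0norm_on E x <= \sum_(k <- E) `|x k|.
Proof.
elim: E => [|a E IH]; first by rewrite c0_nil big_nil.
rewrite c0_cons big_cons ge_max; apply/andP; split.
- by rewrite lerDl sumr_ge0.
- by apply: ler_wpDl.

Qed.

Lemma c0_attained E : c0norm_on E x != 0 -> exists2 k, k \in E & `|x k| = c0norm_on E x.
Proof.
elim: E => [|a E IH]; first by rewrite c0_nil eqxx.
rewrite c0_cons; case: (leP `|x a| (c0norm_on E x)) => H.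
- move=> /IH [k Hk Hk']; exists k => //; by rewrite inE Hk orbT.
- move=> _; exists a => //; exact: mem_head.
Qed.

Definition pick (E : seq nat) : nat := head 0%N [seq k <- E | `|x k| == c0norm_on E x].
Definition okc (E : seq nat) : bool := c0norm_on E x != 0.

Lemma pick_spec E : okc E -> pick E \in E /\ `|x (pick E)| = c0norm_on E x.
Proof.
move=> HE; case: (c0_attained HE) => k Hk Hk'.
rewrite /pick; set l := [seq k <- E | `|x k| == c0norm_on E x].
have Hk2 : k \in l by rewrite mem_filter Hk' eqxx.
have : head 0%N l \in l by case: l Hk2 => // a l' _; rewrite mem_head.
rewrite mem_filter => /andP [/eqP H1 H2]; by split.
Qed.

Lemma pick_in E : okc E -> pick E \in E.
Proof. by case/pick_spec. Qed.

Lemma sum_pts (L : seq (seq nat * seq nat)) (h : seq nat) :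
  \sum_(l <- L | l.2 == h) c0norm_on l.1 x =
  \sum_(k <- [seq pick l.1 | l <- L & (l.2 == h) && okc l.1]) `|x k|.
Proof.
rewrite big_map big_filter (bigID (fun l => okc l.1)) /=.
rewrite [X in _ + X]big1 ?addr0; last by move=> l /andP [_]; rewrite /okc negbK => /eqP.
by apply: eq_bigr => l /andP [_ Hok]; case: (pick_spec Hok).
Qed.

Lemma sum_indic (r : seq (seq nat)) l2 (v : R) : uniq r ->
  \sum_(h <- r) (if l2 == h then v else 0) = if l2 \in r then v else 0.
Proof.
elim: r => [|a r IH]; first by rewrite big_nil.
rewrite /= big_cons inE => /andP [Ha Hu]; rewrite IH //.
case: eqP => [->|_] /=; last by rewrite add0r.
by rewrite (negbTE Ha) addr0.
Qed.

Lemma sum_uniq_le (s t : seq nat) (f : nat -> R) : uniq s -> uniq t -> {subset s <= t} ->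
  (forall k, 0 <= f k) -> \sum_(k <- s) f k <= \sum_(k <- t) f k.
Proof.
move=> Hs Ht Hst Hf.
have Hp : perm_eq t (s ++ [seq y <- t | y \notin s]).
  apply: uniq_perm => //; first by rewrite cat_uniq Hs filter_uniq // andbT;
    apply/hasPn => y; rewrite mem_filter => /andP [].
  move=> y; rewrite mem_cat mem_filter; case Hy: (y \in s) => //=; exact: Hst.
rewrite (perm_big _ Hp) big_cat /= lerDl; exact: sumr_ge0.
Qed.

Lemma sum_c00_le (N : nat) (s : seq nat) : uniq s -> (forall k, (N <= k)%N -> x k = 0) ->
  \sum_(k <- s) `|x k| <= \sum_(k < N) `|x k|.
Proof.
move=> Hs HN.
rewrite (bigID (fun k => (k < N)%N)) /= [X in _ + X]big1 ?addr0; last first.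
  by move=> k; rewrite -leqNgt => /HN ->; rewrite normr0.
rewrite -big_filter -(big_mkord xpredT (fun k => `|x k|)) /index_iota subn0.
apply: sum_uniq_le; rewrite ?filter_uniq ?iota_uniq //.
by move=> k; rewrite mem_filter mem_iota add0n => /andP [-> _].
Qed.

Lemma l1norm_ge N0 (N : nat) : (forall k, (N0 <= k)%N -> x k = 0) ->
  \sum_(k < N) `|x k| <= l1norm x.
Proof.
move=> HN0; apply: ub_le_sup; last by exists N.
exists (\sum_(k < N0) `|x k|) => r [N' ->].
rewrite -(big_mkord xpredT (fun k => `|x k|)) /index_iota subn0.
apply: sum_c00_le => //; exact: iota_uniq.
Qed.

Lemma sum_const_seq (r : seq (seq nat)) (B : R) : \sum_(h <- r) B = (size r)%:R * B.
Proof.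
elim: r => [|a r IH]; first by rewrite big_nil mul0r.
by rewrite big_cons IH /= -natr1 mulrDl mul1r addrC.
Qed.

Lemma sum_bound (L : seq (seq nat * seq nat)) (r : seq (seq nat)) (c B D : R) :
  uniq r -> (forall l, l \in L -> posl l.2) -> 0 <= c ->
  (forall l, l \in L -> l.2 \notin r -> tagp theta l.2 <= c) ->
  (forall h, h \in r -> \sum_(l <- L | l.2 == h) c0norm_on l.1 x <= B) ->
  (size r)%:R * B <= D ->
  \sum_(l <- L) tagp theta l.2 * c0norm_on l.1 x <=
     D + c * \sum_(l <- L) \sum_(k <- l.1) `|x k|.
Proof.
move=> Hu Hpos Hc Hleaf HB HD.
apply: le_trans (_ : \sum_(l <- L) ((\sum_(h <- r) (if l.2 == h then c0norm_on l.1 x else 0))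
                       + c * \sum_(k <- l.1) `|x k|) <= _).
  rewrite big_seq [X in _ <= X]big_seq; apply: ler_sum => l Hl.
  rewrite sum_indic //; have Hp := Hpos l Hl.
  have H0 := c0_ge0 l.1; have HS := c0_le_sum l.1.
  case: ifP => Hin.
  + apply: ler_wpDr; first by apply: mulr_ge0 => //; exact: sumr_ge0.
    by apply: ler_piMl => //; exact: tagp_le1.
  + rewrite add0r; apply: le_trans (_ : c * c0norm_on l.1 x <= _).
      by apply: ler_wpM2r => //; apply: Hleaf; rewrite ?Hin.
    exact: ler_wpM2l.
rewrite big_split /= -mulr_sumr lerD2r exchange_big /=.
apply: le_trans HD; rewrite -sum_const_seq big_seq [X in _ <= X]big_seq.
apply: ler_sum => h Hh; rewrite -big_mkcond; exact: HB.
Qed.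

End Reals.

End R1sec.


Unset Implicit Arguments.
Local Open Scope ring_scope.

Lemma omul1l X : omul oone X = X.
Proof.
elim: X => [|X IH|f IH] //=; first by rewrite IH.
by congr Olim; apply: functional_extensionality => k.
Qed.

Lemma foldl_prodA (alpha : nat -> ord) s : forall X,
  foldl (fun acc k => omul (alpha k) acc) X s =
  omul (foldl (fun acc k => omul (alpha k) acc) oone s) X.
Proof.
elim: s => [|k s IH] X /=.
- by rewrite omul1l.
- by rewrite IH (IH (omul (alpha k) oone)) omul1r omulA.
Qed.

Lemma prodA_cat alpha G r : prodA alpha (G ++ r) = omul (prodA alpha r) (prodA alpha G).
Proof. by rewrite /prodA foldl_cat foldl_prodA. Qed.

Lemma prodA_ge1 (alpha : nat -> ord) s : (forall k, (1 <= k)%N -> ole oone (alpha k)) ->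
  posl s -> ole oone (prodA alpha s).
Proof.
move=> Ha; rewrite /prodA.
suff H : forall X, ole oone X -> posl s -> ole oone (foldl (fun acc k => omul (alpha k) acc) X s).
  by apply: H; exact: ole_refl.
elim: s => //= k s IH X HX /andP [Hk Hs]; apply: IH => //.
have := omul_mono (Ha k Hk) HX; by rewrite omul1r.
Qed.

Lemma four_pow_gt0 (R : realType) k : 0 < four_pow R k.
Proof. by rewrite /four_pow invr_gt0 exprn_gt0. Qed.

Lemma four_pow_le1 (R : realType) k : four_pow R k <= 1.
Proof. rewrite /four_pow invf_le1 ?exprn_gt0 //; apply: exprn_ege1; by rewrite ler1n. Qed.

Lemma eta_of_gt (R : realType) theta alpha (eps : R) p q n o :
  ole o (gamma theta alpha eps (p n)) -> olt o (eta_of theta alpha eps p q n).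
Proof.
case: n => [|[|n']] Ho /=; apply: olt_s => //; exact: ole_trans Ho (oadd_infl _ _).
Qed.

Lemma eta_of_gt2 (R : realType) theta alpha (eps : R) p q n o : (1 < n)%N ->
  ole o (oadd (gamma theta alpha eps (p n)) (gamma theta alpha eps (q n.-1))) ->
  olt o (eta_of theta alpha eps p q n).
Proof. case: n => [|[|n']] // _ Ho /=; exact: olt_s. Qed.

Theorem lemma6 (R : realType) (theta : nat -> R) (F : nat -> fam) (xi : ord)
    (eps : R) (Sch : ord -> fam) (beta : nat -> ord) (M : nat -> pred nat)
    (p q : nat -> nat) (n : nat) (x : nat -> R) :
  (* (theta_n) nonincreasing null in (0,1) *)
  (forall k, (1 <= k)%N -> 0 < theta k < 1) ->
  (forall k, (1 <= k)%N -> theta k.+1 <= theta k) ->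
  (forall e, 0 < e -> exists N, forall k, (N <= k)%N -> theta k < e) ->
  (* regular families, alpha_n = iota(F_n) > 1, alpha = sup alpha_n = omega^(omega^xi),
     alpha <> alpha_n, 0 < xi < omega_1 *)
  (forall k, (1 <= k)%N -> regular (F k)) ->
  (forall k, (1 <= k)%N -> olt oone (iota_CB (F k))) ->
  olt Ozero xi ->
  oeq (Olim (fun k => iota_CB (F k.+1))) (oexp (oexp xi)) ->
  (forall k, (1 <= k)%N -> ~ oeq (oexp (oexp xi)) (iota_CB (F k))) ->
  (* Schreier families, for a fixed choice of approximating sequences *)
  schreier_sys Sch ->
  (* (dagger) for the fixed eps in (0,1) *)
  0 < eps < 1 ->
  (forall b, olt b (oexp xi) -> exists m, (1 <= m)%N /\
     olt (oadd (oadd (gamma theta (fun k => iota_CB (F k)) eps m) otwo) b)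
         (ell (iota_CB (F m)))) ->
  (* (beta_n) is the sequence increasing to omega^xi defining S_{omega^xi} *)
  (forall k, (1 <= k)%N -> olt (beta k) (beta k.+1)) ->
  oeq (Olim (fun k => beta k.+1)) (oexp xi) ->
  (forall s, Sch (oexp xi) s <->
     (s = [::] \/ exists k, (1 <= k)%N /\ (k <= head 0%N s)%N /\ Sch (beta k) s)) ->
  (* the construction of p_n, eta_n, q_n, M_n *)
  construction theta F eps Sch beta M p q ->
  (* the vector x *)
  (1 <= n)%N ->
  c00 x ->
  (forall k, x k != 0 -> M n k) ->
  fnorm (Sch (eta_of theta (fun k => iota_CB (F k)) eps p q n)) x <=
    four_pow R n *
    ((card_of (inK theta (fun k => iota_CB (F k)) (four_pow R n) (p n)
                   (eta_of theta (fun k => iota_CB (F k)) eps p q n)))%:R + 1)^-1 ->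
  (* m = 0: arbitrary admissible trees *)
  (forall T, tree_adm F T ->
     tree_eval theta T x <= four_pow R n + theta (p n) / eps * l1norm x) /\
  (* 0 < m < n: (p_m,q_m)-restricted admissible trees *)
  (forall m T, (0 < m)%N -> (m < n)%N -> tree_adm F T ->
     restricted theta eps (p m) (q m) T ->
     tree_eval theta T x <=
       four_pow R n + theta (p n) * l1norm x * (four_pow R n + four_pow R m)).
Proof.
move=> Hth Hmono Hnull Hreg Halpha Hxi Hsup Hne Hsch Heps Hdag Hbeta Hblim HSxi Hcons Hn Hc00 HxM Hfn.
case: Hcons => [[HM0pos HM0inf] Hpq [Hp1a Hp1b Hp1c] Hge2 HMn].
set alpha := (fun k => iota_CB (F k)) in Hfn HMn Hge2 Hp1b *.
set eta := eta_of theta alpha eps p q n in Hfn HMn *.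
set K := inK theta alpha (four_pow R n) (p n) eta in Hfn HMn *.
have [He0 He1] : 0 < eps /\ eps < 1 by case/andP: Heps.
have Hpn1 : (0 < p n)%N by case: (Hpq n Hn).
have Hthpn : 0 < theta (p n) by case/andP: (Hth _ Hpn1).
have Hf0 := four_pow_gt0 R n; have Hf1 := four_pow_le1 R n.
have Hcz : 0 < four_pow R n * theta (p n) by rewrite mulr_gt0.
have [r [Hu HKr Hsz]] : exists r, [/\ uniq r, forall ns, K ns <-> ns \in r & size r = card_of K].
  apply: (card_spec Hth Hmono Hnull Hcz) => ns [H1 H2 _]; by split.
rewrite -Hsz in Hfn.
have Hal1 : forall k, (1 <= k)%N -> ole oone (alpha k) by move=> k Hk; apply: olt_ole; exact: Halpha.
case: Hc00 => N0 HN0.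
have [b Hetab] : exists b, eta = Osucc b.
  by rewrite /eta /eta_of; case: (n) => [|[|n']]; eexists.
have Sch_fset : forall s, Sch eta s -> fset s.
  move=> s; case: Hsch => _ _ Hsucc _; rewrite (Hsucc eta b) ?Hetab; last by split; exact: ole_refl.
  exact: comp_fset.
have fnorm_ge : forall s, Sch eta s -> \sum_(k <- s) `|x k| <= fnorm (Sch eta) x.
  move=> s Hs; apply: ub_le_sup; last by exists s.
  exists (\sum_(k < N0) `|x k|) => r' [s' [Hs' ->]].
  apply: sum_c00_le => //; case/andP: (Sch_fset s' Hs') => Hso _.
  exact: (sorted_uniq ltn_trans ltnn).
set B := four_pow R n / ((size r)%:R + 1).
have HB : (size r)%:R * B <= four_pow R n.
  rewrite /B mulrCA; apply: ler_piMr; first exact: ltW.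
  rewrite ler_pdivrMr ?mul1r ?lerDl //; by rewrite ltr_wpDl.
have main : forall T c, tree_adm F T -> 0 <= c ->
    (forall l, l \in leaves T [::] -> ~ K l.2 -> tagp theta l.2 <= c) ->
    tree_eval theta T x <= four_pow R n + c * l1norm x.
  move=> T c HT Hc Hleaf.
  have Hlv := leaves_prop HT.
  apply: le_trans (sum_bound Hth (x := x) (r := r) (B := B) Hu _ Hc _ _ HB) _.
  - by move=> l /Hlv [].
  - by move=> l Hl Hn'; apply: Hleaf => // /HKr; apply/negP.
  - move=> h Hh.
    set pt := pts (pick x) (okc x) T h.
    have -> : \sum_(l <- leaves T [::] | l.2 == h) c0norm_on l.1 x = \sum_(k <- pt) `|x k|.
      exact: (sum_pts x (leaves T [::]) h).
    have [Hcl _] := pts_main Hreg (@pick_in R x) HT h.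
    have HSch : Sch eta pt.
      apply: ((HMn n Hn).2 h); [exact/HKr | | exact: Hcl].
      apply/allP => k /mapP [l Hl ->]; rewrite mem_filter in Hl.
      case/andP: Hl => /andP [_ Hok] _; case: (@pick_spec R x _ Hok) => _ Hab.
      apply: HxM; apply/negP => /eqP Hx0; move: Hok; by rewrite /okc -Hab Hx0 normr0 eqxx.
    apply: le_trans (fnorm_ge _ HSch) Hfn.
  - rewrite lerD2l; apply: ler_wpM2l => //.
    have -> : \sum_(l <- leaves T [::]) \sum_(k <- l.1) `|x k| =
              \sum_(k <- flatten (map fst (leaves T [::]))) `|x k| by rewrite big_flatten big_map.
    apply: le_trans (sum_c00_le _ HN0) (l1norm_ge N0 HN0).
    apply: pairwise_sep_uniq (leaves_pairwise HT) _.
    by apply/allP => l /Hlv [].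
have Hle : theta (p n) <= theta (p n) / eps.
  rewrite ler_pdivlMr //; apply: ler_piMr; [exact: ltW | exact: ltW].
split.
- move=> T HT; apply: main => //; first by apply: divr_ge0; apply: ltW.
  move=> l Hl HnK; have [_ _ Hpos] := leaves_prop HT Hl.
  case: (boolP (four_pow R n * theta (p n) < tagp theta l.2)) => Hsm; last first.
    rewrite -leNgt in Hsm; apply: le_trans Hsm (le_trans _ Hle).
    by apply: ler_piMl => //; exact: ltW.
  have Hnlt : ~ olt (ell (prodA alpha l.2)) eta by move=> H; apply: HnK; split.
  rewrite ler_pdivlMr // mulrC leNgt; apply/negP => Hlt; apply: Hnlt; apply: eta_of_gt.
  have [Hg _] := gamma_spec Hth Hmono Hnull alpha Hpn1 He0.
  exact: Hg l.2 (conj Hpos Hlt).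
- move=> m T Hm Hmn HT Hres.
  have Hn2 : (1 < n)%N := leq_ltn_trans Hm Hmn.
  have Hqm1 : (0 < q m)%N by case: (Hpq m Hm).
  have Hpm1 : (0 < p m)%N by case: (Hpq m Hm).
  have Hn1' : (0 < n.-1)%N by case: n Hn2 {Hfn HB main Hle HMn Hge2 Hetab Hsz HKr HxM Hn Hmn Hf0 Hf1 Hcz Hthpn Hpn1 Sch_fset fnorm_ge K eta b B Hres} => [|[|n']].
  have Hqn1 : (0 < q n.-1)%N by case: (Hpq n.-1 Hn1').
  have qmono : forall a c, (1 <= a)%N -> (a <= c)%N -> (q a <= q c)%N.
    move=> a c Ha; elim: c => [|c IH]; first by rewrite leqn0 => /eqP Ha0; rewrite Ha0 in Ha.
    rewrite leq_eqVlt => /orP [/eqP <-|Hac]; first by [].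
    have Hc1 : (1 < c.+1)%N by apply: leq_ltn_trans Ha Hac.
    case: (Hge2 c.+1 Hc1) => /= H1 _ _ H2 _.
    apply: leq_trans (IH Hac) _; apply: ltnW; exact: ltn_trans H1 H2.
  have Hmn' : (m <= n.-1)%N by rewrite -ltnS prednK // (leq_trans _ Hn2).
  have Hqq : theta (q n.-1) <= theta (q m) by apply: th_anti => //; exact: qmono.
  have Hpm : theta (p m) <= eps ^+ 2 * four_pow R m.
    case: (eqVneq m 1%N) => [->|Hm1]; first exact: Hp1a.
    have Hm2 : (1 < m)%N by rewrite ltn_neqAle eq_sym Hm1 Hm.
    by case: (Hge2 m Hm2).
  have Hfm := four_pow_gt0 R m.
  rewrite mulrAC; apply: main => //.
    by apply: mulr_ge0; [exact: ltW | rewrite addr_ge0 // ltW].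
  move=> l Hl HnK; have [_ _ Hpos] := leaves_prop HT Hl.
  case: (Hres l Hl) => j [Hj [[HpG' HqG] HpG]].
  have Hprr : posl (drop j l.2).
    by move: Hpos; rewrite -{1}(cat_take_drop j l.2) /posl all_cat => /andP [].
  case: (boolP (four_pow R n * theta (p n) < tagp theta l.2)) => Hsm; last first.
    rewrite -leNgt in Hsm; apply: le_trans Hsm _.
    rewrite mulrC; apply: ler_wpM2l; first exact: ltW.
    by rewrite lerDl ltW.
  have Hnlt : ~ olt (ell (prodA alpha l.2)) eta by move=> H; apply: HnK; split.
  have HG1 : eps * tagp theta (take j l.2) <= theta (p m).
    by rewrite leNgt; apply/negP => H; apply: HpG; split.
  have HrrE : eps * tagp theta (drop j l.2) <= theta (p n).
    rewrite leNgt; apply/negP => Hlt; apply: Hnlt.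
    have [Hgp _] := gamma_spec Hth Hmono Hnull alpha Hpn1 He0.
    have [Hgq _] := gamma_spec Hth Hmono Hnull alpha Hqn1 He0.
    have H1 := Hgp _ (conj Hprr Hlt).
    have H2 := Hgq _ (conj HpG' (le_lt_trans Hqq HqG)).
    apply: eta_of_gt2 => //.
    rewrite -(cat_take_drop j l.2) prodA_cat.
    apply: ole_trans (ell_mul (prodA_ge1 _ _ Hal1 Hprr) (prodA_ge1 _ _ Hal1 HpG')) _.
    exact: oadd_mono.
  rewrite -(cat_take_drop j l.2) tagp_cat.
  set tG := tagp theta (take j l.2) in HG1 *; set tR := tagp theta (drop j l.2) in HrrE *.
  have HtG : 0 <= tG by apply: ltW; exact: tagp_pos.
  have HtR : 0 <= tR by apply: ltW; exact: tagp_pos.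
  have H1 : (eps * tG) * (eps * tR) <= theta (p m) * theta (p n).
    by apply: ler_pM => //; apply: mulr_ge0 => //; exact: ltW.
  have H2 : theta (p m) * theta (p n) <= eps ^+ 2 * four_pow R m * theta (p n).
    by apply: ler_wpM2r => //; exact: ltW.
  have H3 : eps ^+ 2 * (tG * tR) <= eps ^+ 2 * (four_pow R m * theta (p n)).
    have E1 : eps * tG * (eps * tR) = eps ^+ 2 * (tG * tR) by rewrite expr2; ring.
    have E2 : eps ^+ 2 * four_pow R m * theta (p n) = eps ^+ 2 * (four_pow R m * theta (p n)).
      by rewrite mulrA.
    by rewrite -E1 -E2; exact: le_trans H1 H2.
  rewrite ler_pM2l ?exprn_gt0 // in H3.
  have H4 : 0 <= theta (p n) * four_pow R n by apply: mulr_ge0; exact: ltW.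
  lra.
Qed.
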